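(* Let $0<r\le1$ and $0<\alpha\le\frac12$. Let $a:\mathbb{Z}^n\to\mathbb{C}$ satisfy $|a(\xi)|\le C\langle\xi\rangle^m$ for all $\xi\in\mathbb{Z}^n$. Assume $1<p_1\le2$, $q_1=(\alpha+\frac1{p_1'})^{-1}$, and $m<-\frac nr-\alpha n$. Then the Fourier multiplier $T_a$ is $r$-nuclear on $B^w_{p_1,q_1}(\mathbb{T}^n)$ for every $w\in\mathbb{R}$, and its nuclear trace is $\mathrm{Tr}(T_a)=\sum_{\xi\in\mathbb{Z}^n}a(\xi)$.
   Context: $\widehat f(\xi)=\int_{\mathbb{T}^n}e^{-i2\pi x\cdot\xi}f(x)dx$, $\langle\xi\rangle=(1+|\xi|^2)^{1/2}$. $T_au(x)=\sum_{\xi\in\mathbb{Z}^n}e^{i2\pi x\cdot\xi}a(\xi)\widehat u(\xi)$. Periodic Besov spaces: $\|f\|_{B^w_{p,q}}=\big(\sum_{m\ge0}2^{mwq}\|\sum_{2^m\le|\xi|<2^{m+1}}e^{i2\pi x\cdot\xi}\widehat f(\xi)\|^q_{L^p(\mathbb{T}^n)}\big)^{1/q}$. $p'$ is the conjugate exponent. $T:E\to E$ is $r$-nuclear if $T=\sum_ne'_n(\cdot)y_n$ with $\sum_n\|e'_n\|^r_{E'}\|y_n\|^r_E<\infty$; on a space with the approximation property its nuclear trace is $\sum_ne'_n(y_n)$. *)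

(* Defs.v *)
From Stdlib Require Import Reals ZArith List.
From Coquelicot Require Export Coquelicot.
Import ListNotations.
Open Scope R_scope.

(* Points of Z^n are lists of integers of length n; points of T^n = [0,1)^n
   are lists of reals of length n. *)

(* x^y for x >= 0, with 0^y = 0 (y > 0 in all uses). *)
Definition rpow (x y : R) : R := if Rlt_dec 0 x then Rpower x y else 0.

(* iterated integral over [0,1]^n (Lebesgue measure on T^n) *)
Fixpoint intT (n : nat) (f : list R -> R) : R :=
  match n with
  | O => f nil
  | S k => RInt (fun t => intT k (fun y => f (t :: y))) 0 1
  end.

Fixpoint dotRZ (x : list R) (xi : list Z) : R :=
  match x, xi with
  | a :: x', b :: xi' => a * IZR b + dotRZ x' xi'
  | _, _ => 0
  end.

Definition normsq (xi : list Z) : Z := fold_right (fun z acc => (z * z + acc)%Z) 0%Z xi.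

(* <xi> = (1+|xi|^2)^(1/2), and <xi>^m *)
Definition japbr_pow (xi : list Z) (m : R) : R := Rpower (1 + IZR (normsq xi)) (m / 2).

Fixpoint box (n N : nat) : list (list Z) :=
  match n with
  | O => [nil]
  | S k => flat_map (fun z => map (cons z) (box k N))
             (map (fun j => (Z.of_nat j - Z.of_nat N)%Z) (seq 0 (2 * N + 1)))
  end.

(* dyadic block m: 2^m <= |xi| < 2^(m+1); block 0 also contains |xi| < 1
   (i.e. xi = 0) *)
Definition block (m : nat) (xi : list Z) : bool :=
  match m with
  | O => (normsq xi <? 4)%Z
  | S _ => andb (4 ^ Z.of_nat m <=? normsq xi)%Z (normsq xi <? 4 ^ Z.of_nat (S m))%Z
  end.

Definition cexp2pi (t : R) : C := (cos (2 * PI * t), sin (2 * PI * t)).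

(* periodic distributions are represented by their Fourier coefficients
   c : Z^n -> C ; the m-th dyadic piece sum_{block m} e^{i2pi x.xi} c(xi) *)
Definition blockpoly (n : nat) (c : list Z -> C) (m : nat) (x : list R) : C :=
  fold_right Cplus 0%C
    (map (fun xi => Cmult (cexp2pi (dotRZ x xi)) (c xi))
       (filter (block m) (box n (2 ^ (S m))))).

Definition Lpnorm (n : nat) (p : R) (g : list R -> C) : R :=
  rpow (intT n (fun x => rpow (Cmod (g x)) p)) (/ p).

Definition besov_term (n : nat) (w p q : R) (c : list Z -> C) (m : nat) : R :=
  Rpower 2 (INR m * w * q) * rpow (Lpnorm n p (blockpoly n c m)) q.

Definition in_besov (n : nat) (w p q : R) (c : list Z -> C) : Prop :=
  ex_series (besov_term n w p q c).

Definition besov_norm (n : nat) (w p q : R) (c : list Z -> C) : R :=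
  rpow (Series (besov_term n w p q c)) (/ q).

Definition cadd (c d : list Z -> C) : list Z -> C := fun xi => Cplus (c xi) (d xi).
Definition csub (c d : list Z -> C) : list Z -> C := fun xi => Cminus (c xi) (d xi).
Definition cscal (l : C) (c : list Z -> C) : list Z -> C := fun xi => Cmult l (c xi).

Definition Tmult (a : list Z -> C) (c : list Z -> C) : list Z -> C :=
  fun xi => Cmult (a xi) (c xi).

Fixpoint psum (phi : nat -> (list Z -> C) -> C) (y : nat -> list Z -> C)
   (c : list Z -> C) (K : nat) : list Z -> C :=
  match K with
  | O => fun _ => 0%C
  | S k => cadd (psum phi y c k) (cscal (phi k c) (y k))
  end.

Definition dual_elem (n : nat) (w p q : R) (phi : (list Z -> C) -> C) (M : R) : Prop :=
  0 <= M /\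
  (forall c d, in_besov n w p q c -> in_besov n w p q d ->
     phi (cadd c d) = Cplus (phi c) (phi d)) /\
  (forall l c, in_besov n w p q c -> phi (cscal l c) = Cmult l (phi c)) /\
  (forall c, in_besov n w p q c -> Cmod (phi c) <= M * besov_norm n w p q c).

(* T = sum_k phi_k(.) y_k with sum_k ||phi_k||^r ||y_k||^r < oo
   (M k bounds ||phi_k||_{E'}), the series converging in B^w_{p,q} *)
Definition nuclear_rep (n : nat) (w p q r : R) (T : (list Z -> C) -> list Z -> C)
  (phi : nat -> (list Z -> C) -> C) (M : nat -> R) (y : nat -> list Z -> C) : Prop :=
  (forall k, dual_elem n w p q (phi k) (M k)) /\
  (forall k, in_besov n w p q (y k)) /\
  ex_series (fun k => rpow (M k * besov_norm n w p q (y k)) r) /\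
  (forall c, in_besov n w p q c ->
     is_lim_seq (fun K => besov_norm n w p q (csub (T c) (psum phi y c K))) 0).

Definition r_nuclear (n : nat) (w p q r : R) (T : (list Z -> C) -> list Z -> C) : Prop :=
  (forall c, in_besov n w p q c -> in_besov n w p q (T c)) /\
  exists phi M y, nuclear_rep n w p q r T phi M y.

(* sum over Z^n, as the limit of the sums over the boxes [-N,N]^n *)
Definition box_sum (n : nat) (a : list Z -> C) (N : nat) : C :=
  fold_right Cplus 0%C (map a (box n N)).

Definition conj_exp (p : R) : R := p / (p - 1).

(* Main.v *)
Require Import Defs.
From Stdlib Require Import Reals ZArith List Lra Lia Psatz FunctionalExtensionality Permutation.
From Coquelicot Require Import Coquelicot.
Import ListNotations.
Open Scope R_scope.

Open Scope R_scope.

Lemma rpow_ge0 x y : 0 <= rpow x y.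
Proof. unfold rpow; destruct (Rlt_dec 0 x); [unfold Rpower; left; apply exp_pos| lra]. Qed.
Lemma rpow_le0 x y : x <= 0 -> rpow x y = 0.
Proof. intros; unfold rpow; destruct (Rlt_dec 0 x); [lra|auto]. Qed.
Lemma rpow_pos x y : 0 < x -> rpow x y = Rpower x y.
Proof. intros; unfold rpow; destruct (Rlt_dec 0 x); [auto|lra]. Qed.
Lemma rpow_gt0 x y : 0 < x -> 0 < rpow x y.
Proof. intros; rewrite rpow_pos; auto; apply exp_pos. Qed.

Lemma rpow_le x y s : 0 <= x <= y -> 0 <= s -> rpow x s <= rpow y s.
Proof. intros [h1 h2] hs. destruct (Req_dec x 0) as [->|hx].
  - rewrite rpow_le0 by lra; apply rpow_ge0.
  - rewrite !rpow_pos by lra. apply Rle_Rpower_l; lra. Qed.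

Lemma rpow_lt x y s : 0 <= x < y -> 0 < s -> rpow x s < rpow y s.
Proof. intros [h1 h2] hs. destruct (Req_dec x 0) as [->|hx].
  - rewrite rpow_le0 by lra; apply rpow_gt0; lra.
  - rewrite !rpow_pos by lra. unfold Rpower. apply exp_increasing.
    apply Rmult_lt_compat_l; auto. apply ln_increasing; lra. Qed.

Lemma rpow_le_inv x y s : 0 <= x -> 0 <= y -> 0 < s -> rpow x s <= rpow y s -> x <= y.
Proof. intros hx hy hs H. destruct (Rle_lt_dec x y); auto.
  pose proof (rpow_lt y x s ltac:(lra) hs); lra. Qed.

Lemma rpow_rpow x a b : 0 <= x -> rpow (rpow x a) b = rpow x (a * b).
Proof. intros hx. destruct (Req_dec x 0) as [->|hx'].
  - rewrite (rpow_le0 0 a) by lra. rewrite !rpow_le0 by lra. reflexivity.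
  - rewrite (rpow_pos x a) by lra. rewrite rpow_pos by apply exp_pos.
    rewrite rpow_pos by lra. apply Rpower_mult. Qed.

Lemma rpow_1 x : 0 <= x -> rpow x 1 = x.
Proof. intros hx. destruct (Req_dec x 0) as [->|hx']. apply rpow_le0; lra.
  rewrite rpow_pos by lra. apply Rpower_1; lra. Qed.

Lemma rpow_inv x s : 0 <= x -> s <> 0 -> rpow (rpow x s) (/ s) = x.
Proof. intros hx hs. rewrite rpow_rpow by auto. rewrite Rinv_r by auto. apply rpow_1; auto. Qed.

Lemma rpow_mult x y s : 0 <= x -> 0 <= y -> rpow (x * y) s = rpow x s * rpow y s.
Proof. intros hx hy. destruct (Req_dec x 0) as [->|hx'].
  { rewrite Rmult_0_l, (rpow_le0 0 s) by lra; ring. }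
  destruct (Req_dec y 0) as [->|hy'].
  { rewrite Rmult_0_r, (rpow_le0 0 s) by lra; ring. }
  rewrite !rpow_pos by nra. rewrite Rpower_mult_distr; auto; lra. Qed.

Lemma rpow_one s : rpow 1 s = 1.
Proof. rewrite rpow_pos by lra. unfold Rpower. rewrite ln_1, Rmult_0_r, exp_0; auto. Qed.

Lemma rpow_0r x : 0 < x -> rpow x 0 = 1.
Proof. intros; rewrite rpow_pos by auto. apply Rpower_O; auto. Qed.

Lemma rpow_plus x a b : 0 < x -> rpow x (a + b) = rpow x a * rpow x b.
Proof. intros; rewrite !rpow_pos by auto. apply Rpower_plus. Qed.

Lemma rpow_max_le x y s : 0 <= x -> 0 <= y -> 0 <= s -> rpow (Rmax x y) s <= rpow x s + rpow y s.
Proof. intros. unfold Rmax; destruct (Rle_dec x y);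
  pose proof (rpow_ge0 x s); pose proof (rpow_ge0 y s); lra. Qed.

Lemma rpow_sum_le x y s : 0 <= x -> 0 <= y -> 0 <= s ->
  rpow (x + y) s <= rpow 2 s * (rpow x s + rpow y s).
Proof. intros hx hy hs.
  apply Rle_trans with (rpow (2 * Rmax x y) s).
  - apply rpow_le; auto. split; [lra|]. pose proof (Rmax_l x y); pose proof (Rmax_r x y); lra.
  - assert (0 <= Rmax x y) by (apply Rle_trans with x; [lra|apply Rmax_l]).
    rewrite rpow_mult by lra.
    apply Rmult_le_compat_l; [apply rpow_ge0|]. apply rpow_max_le; auto. Qed.

Lemma Rpower_1' y : Rpower 1 y = 1.
Proof. unfold Rpower. rewrite ln_1, Rmult_0_r, exp_0; auto. Qed.

Lemma bernoulli u p : 0 <= u -> 1 <= p -> 1 + p * (u - 1) <= rpow u p.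
Proof.
  intros hu hp. destruct (Req_dec u 0) as [->|hu0].
  { rewrite rpow_le0 by lra. lra. }
  rewrite rpow_pos by lra.
  set (f := fun v => Rpower v p - p * v).
  assert (D: forall c, 0 < c -> derivable_pt_lim f c (p * Rpower c (p - 1) - p)).
  { intros c hc. unfold f. replace (p * Rpower c (p - 1) - p) with (p * Rpower c (p - 1) - p * 1) by ring.
    apply derivable_pt_lim_minus. apply derivable_pt_lim_power; auto.
    apply derivable_pt_lim_scal. apply derivable_pt_lim_id. }
  assert (f1 : f 1 = 1 - p). { unfold f. rewrite Rpower_1' ; ring. }
  destruct (Rtotal_order u 1) as [hlt|[heq|hgt]].
  - destruct (MVT_cor2 f (fun c => p * Rpower c (p - 1) - p) u 1 hlt) as [c [Hc Hc2]].
    { intros c hc; apply D; lra. }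
    assert (Rpower c (p-1) <= Rpower 1 (p-1)) by (apply Rle_Rpower_l; lra).
    rewrite Rpower_1' in H.
    assert (0 <= p * ((1 - Rpower c (p-1)) * (1 - u))) by (apply Rmult_le_pos; [lra| apply Rmult_le_pos; lra]).
    unfold f in Hc. rewrite Rpower_1' in Hc. nra.
  - subst. rewrite Rpower_1'; lra.
  - destruct (MVT_cor2 f (fun c => p * Rpower c (p - 1) - p) 1 u hgt) as [c [Hc Hc2]].
    { intros c hc; apply D; lra. }
    assert (Rpower c 0 <= Rpower c (p-1)) by (apply Rle_Rpower; lra).
    rewrite Rpower_O in H by lra.
    assert (0 <= p * ((Rpower c (p-1) - 1) * (u - 1))) by (apply Rmult_le_pos; [lra| apply Rmult_le_pos; lra]).
    unfold f in Hc. rewrite Rpower_1' in Hc. nra.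
Qed.

Lemma rpow_inv_base A p : 0 < A -> rpow (/ A) p = rpow A (- p).
Proof. intros hA. rewrite !rpow_pos by (try apply Rinv_0_lt_compat; lra).
  unfold Rpower. rewrite ln_Rinv by lra. f_equal; ring. Qed.

Lemma young x A p : 0 <= x -> 0 < A -> 1 <= p ->
  x <= A * (1 - / p) + / p * rpow A (1 - p) * rpow x p.
Proof.
  intros hx hA hp.
  pose proof (bernoulli (x / A) p ltac:(apply Rdiv_le_0_compat; lra) hp) as B.
  unfold Rdiv in B. rewrite rpow_mult in B by (try apply Rlt_le, Rinv_0_lt_compat; lra).
  rewrite rpow_inv_base in B by lra.
  replace (1 - p) with (1 + - p) by ring. rewrite rpow_plus by lra. rewrite rpow_1 by lra.
  assert (hp' : 0 < / p) by (apply Rinv_0_lt_compat; lra).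
  assert (E : x = A * (x * / A)) by (field; lra).
  pose proof (rpow_ge0 x p). pose proof (rpow_ge0 A (-p)).
  apply Rmult_le_compat_l with (r := A * / p) in B; [|nra].
  assert (E2: A * / p * (1 + p * (x * / A - 1)) = A * / p + x - A) by (field; lra).
  rewrite E2 in B. nra.
Qed.

Lemma rpow_Lip p B : 1 <= p -> 0 <= B -> forall u v, 0 <= u <= B -> 0 <= v <= B ->
  Rabs (rpow u p - rpow v p) <= p * rpow (B + 1) (p - 1) * Rabs (u - v).
Proof.
  intros hp hB.
  assert (K: forall c, 0 < c <= B -> Rpower c (p - 1) <= rpow (B+1) (p-1)).
  { intros c hc. rewrite rpow_pos by lra. apply Rle_Rpower_l; lra. }
  assert (W: forall u v, 0 <= v <= u -> u <= B ->
     Rabs (rpow u p - rpow v p) <= p * rpow (B + 1) (p - 1) * Rabs (u - v)).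
  { intros u v [hv hvu] huB. pose proof (rpow_ge0 (B+1) (p-1)).
    rewrite (Rabs_right (u - v)) by lra.
    destruct (Req_dec u v) as [<-|hne].
    { unfold Rminus; rewrite Rplus_opp_r, Rabs_R0. nra. }
    destruct (Req_dec v 0) as [->|hv0].
    - rewrite (rpow_le0 0) by lra. rewrite rpow_pos by lra.
      rewrite Rminus_0_r, Rabs_right by (left; apply exp_pos).
      replace p with (1 + (p - 1)) at 1 by ring. rewrite Rpower_plus, Rpower_1 by lra.
      specialize (K u ltac:(lra)).
      assert (0 <= u * (rpow (B+1) (p-1) - Rpower u (p-1))) by (apply Rmult_le_pos; lra).
      assert (0 <= (p - 1) * (rpow (B+1) (p-1) * u)) by (apply Rmult_le_pos; [lra|apply Rmult_le_pos; lra]).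
      nra.
    - rewrite !rpow_pos by lra.
      destruct (MVT_cor2 (fun x => Rpower x p) (fun c => p * Rpower c (p - 1)) v u ltac:(lra)) as [c [Hc Hc2]].
      { intros c hc. apply derivable_pt_lim_power; lra. }
      rewrite Hc. specialize (K c ltac:(lra)).
      pose proof (exp_pos ((p-1) * ln c)). unfold Rpower in *.
      rewrite Rabs_right by (apply Rle_ge, Rmult_le_pos; nra).
      apply Rmult_le_compat_r; [lra|]. apply Rmult_le_compat_l; [lra|]. rewrite rpow_pos in K by lra. exact K. }
  intros u v hu hv. destruct (Rle_lt_dec v u).
  - apply W; lra.
  - rewrite Rabs_minus_sym, (Rabs_minus_sym u). apply W; lra.
Qed.

Open Scope R_scope.

Fixpoint ldist (x y : list R) : R :=
  match x, y with
  | a :: x', b :: y' => Rabs (a - b) + ldist x' y'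
  | _, _ => 0
  end.

Lemma ldist_ge0 x y : 0 <= ldist x y.
Proof. revert y; induction x as [|a x IH]; intros [|b y]; simpl; try lra.
  specialize (IH y). pose proof (Rabs_pos (a-b)). lra. Qed.

Lemma ldist_refl x : ldist x x = 0.
Proof. induction x; simpl; auto. rewrite IHx. unfold Rminus; rewrite Rplus_opp_r, Rabs_R0; ring. Qed.

Definition Lip (k : nat) (F : list R -> R) (L : R) : Prop :=
  0 <= L /\ forall x y, length x = k -> length y = k -> Rabs (F x - F y) <= L * ldist x y.

Lemma Lip_plus k F G L1 L2 : Lip k F L1 -> Lip k G L2 -> Lip k (fun x => F x + G x) (L1 + L2).
Proof.
  intros [h1 H1] [h2 H2]; split; [lra|]. intros x y hx hy.
  specialize (H1 x y hx hy); specialize (H2 x y hx hy).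
  pose proof (ldist_ge0 x y).
  replace (F x + G x - (F y + G y)) with ((F x - F y) + (G x - G y)) by ring.
  eapply Rle_trans; [apply Rabs_triang|]. nra.
Qed.

Lemma Lip_scal k F L c : Lip k F L -> Lip k (fun x => c * F x) (Rabs c * L).
Proof.
  intros [h1 H1]; split; [apply Rmult_le_pos; [apply Rabs_pos|lra]|]. intros x y hx hy.
  replace (c * F x - c * F y) with (c * (F x - F y)) by ring.
  rewrite Rabs_mult. rewrite Rmult_assoc. apply Rmult_le_compat_l; [apply Rabs_pos|]. auto.
Qed.

Lemma Lip_const k c : Lip k (fun _ => c) 0.
Proof. split; [lra|]. intros. unfold Rminus; rewrite Rplus_opp_r, Rabs_R0.
  pose proof (ldist_ge0 x y); nra. Qed.

Lemma Lip_mono k F L L' : Lip k F L -> L <= L' -> Lip k F L'.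
Proof. intros [h H] hl; split; [lra|]. intros x y hx hy. specialize (H x y hx hy).
  pose proof (ldist_ge0 x y); nra. Qed.

Lemma Lip_slice k F L t : Lip (S k) F L -> Lip k (fun y => F (t :: y)) L.
Proof. intros [h H]; split; auto. intros x y hx hy.
  specialize (H (t::x) (t::y)). simpl in H. rewrite hx, hy in H.
  unfold Rminus at 2 in H; rewrite Rplus_opp_r, Rabs_R0, Rplus_0_l in H. auto. Qed.

Lemma intT_ext k F G : (forall x, length x = k -> F x = G x) -> intT k F = intT k G.
Proof. revert F G; induction k; intros F G H; simpl.
 - apply H; reflexivity.
 - apply RInt_ext. intros t _. apply IHk. intros y hy. apply H. simpl; auto.
Qed.

Lemma RInt01_const (c:R) : RInt (fun _ => c) 0 1 = c.
Proof. rewrite RInt_const. unfold scal; simpl; unfold mult; simpl. ring. Qed.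

Lemma intT_const k c : intT k (fun _ => c) = c.
Proof. induction k; simpl; auto. rewrite (RInt_ext _ (fun _ => c)).
  - apply RInt01_const.
  - intros; apply IHk. Qed.

Definition IntProps (k : nat) : Prop :=
  (forall F G L1 L2, Lip k F L1 -> Lip k G L2 ->
     intT k (fun x => F x + G x) = intT k F + intT k G) /\
  (forall F L c, Lip k F L -> intT k (fun x => c * F x) = c * intT k F) /\
  (forall F G L1 L2, Lip k F L1 -> Lip k G L2 ->
     (forall x, length x = k -> F x <= G x) -> intT k F <= intT k G).

Lemma inner_Lip k F L : IntProps k -> Lip (S k) F L ->
  forall t s, Rabs (intT k (fun y => F (t::y)) - intT k (fun y => F (s::y))) <= L * Rabs (t - s).
Proof.
  intros [Hp [Hs Hm]] HF t s.
  pose proof (Lip_slice k F L t HF) as Ht. pose proof (Lip_slice k F L s HF) as Hs'.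
  pose proof (Lip_scal _ _ _ (-1) Hs') as Hs''.
  assert (E: intT k (fun y => F (t::y)) - intT k (fun y => F (s::y)) =
             intT k (fun y => F (t::y) + (-1) * F (s::y))).
  { rewrite (Hp _ _ _ _ Ht Hs''). rewrite (Hs _ _ (-1) Hs'). ring. }
  rewrite E. destruct HF as [hL HF].
  assert (B: forall y, length y = k -> Rabs (F (t::y) + (-1) * F (s::y)) <= L * Rabs (t-s)).
  { intros y hy. specialize (HF (t::y) (s::y)). simpl in HF. rewrite hy, ldist_refl in HF.
    replace (F (t::y) + (-1) * F (s::y)) with (F (t::y) - F (s::y)) by ring.
    rewrite Rplus_0_r in HF. apply HF; auto. }
  pose proof (Lip_plus _ _ _ _ _ Ht Hs'') as HL.
  apply Rabs_le. split.
  - rewrite <- (intT_const k (- (L * Rabs (t-s)))) at 1.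
    apply (Hm _ _ 0 _ (Lip_const _ _) HL). intros y hy. specialize (B y hy).
    apply Rabs_le_between in B; lra.
  - rewrite <- (intT_const k (L * Rabs (t-s))).
    apply (Hm _ _ _ 0 HL (Lip_const _ _)). intros y hy. specialize (B y hy).
    apply Rabs_le_between in B; lra.
Qed.

Lemma Lip1_cont (f : R -> R) L : 0 <= L -> (forall t s, Rabs (f t - f s) <= L * Rabs (t - s)) ->
  forall z, continuous f z.
Proof.
  intros hL H z. apply continuity_pt_filterlim.
  unfold continuity_pt, continue_in, limit1_in, limit_in. intros eps He.
  exists (eps / (L + 1)). split. { apply Rdiv_lt_0_compat; lra. }
  intros x [_ Hx]. simpl in *. unfold R_dist in *.
  eapply Rle_lt_trans; [apply H|].
  apply Rle_lt_trans with ((L+1) * Rabs (x - z)). { pose proof (Rabs_pos (x-z)); nra. }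
  replace eps with ((L+1) * (eps / (L+1))) by (field; lra).
  apply Rmult_lt_compat_l; lra.
Qed.

Lemma inner_exRInt k F L : IntProps k -> Lip (S k) F L ->
  ex_RInt (fun t => intT k (fun y => F (t::y))) 0 1.
Proof.
  intros HP HF. apply (@ex_RInt_continuous R_CompleteNormedModule). intros z _.
  apply (Lip1_cont _ L); [destruct HF; auto|]. apply inner_Lip; auto.
Qed.

Lemma IntProps_all k : IntProps k.
Proof.
  induction k as [|k IH].
  - split; [|split]; simpl; intros; auto. idtac.
  - split; [|split].
    + intros F G L1 L2 HF HG. simpl.
      rewrite (RInt_ext _ (fun t => plus (intT k (fun y => F (t::y))) (intT k (fun y => G (t::y))))).
      * rewrite (@RInt_plus R_CompleteNormedModule); [reflexivity| |]; eapply inner_exRInt; eauto.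
      * intros t _. destruct IH as [Hp _]. apply (Hp _ _ L1 L2); apply Lip_slice; auto.
    + intros F L c HF. simpl.
      rewrite (RInt_ext _ (fun t => scal c (intT k (fun y => F (t::y))))).
      * rewrite (@RInt_scal R_CompleteNormedModule); [reflexivity|]; eapply inner_exRInt; eauto.
      * intros t _. destruct IH as [_ [Hs _]]. apply (Hs _ L); apply Lip_slice; auto.
    + intros F G L1 L2 HF HG Hle. simpl. apply RInt_le; [lra| eapply inner_exRInt; eauto | eapply inner_exRInt; eauto |].
      intros t _. destruct IH as [_ [_ Hm]]. apply (Hm _ _ L1 L2); try apply Lip_slice; auto.
      intros y hy; apply Hle; simpl; auto.
Qed.

Lemma intT_plus k F G L1 L2 : Lip k F L1 -> Lip k G L2 ->
  intT k (fun x => F x + G x) = intT k F + intT k G.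
Proof. destruct (IntProps_all k) as [H _]; eauto. Qed.
Lemma intT_scal k F L c : Lip k F L -> intT k (fun x => c * F x) = c * intT k F.
Proof. destruct (IntProps_all k) as [_ [H _]]; eauto. Qed.
Lemma intT_le k F G L1 L2 : Lip k F L1 -> Lip k G L2 ->
  (forall x, length x = k -> F x <= G x) -> intT k F <= intT k G.
Proof. destruct (IntProps_all k) as [_ [_ H]]; eauto. Qed.

Open Scope R_scope.

Definition LipE k F := exists L, Lip k F L.

Lemma LipE_plus k F G : LipE k F -> LipE k G -> LipE k (fun x => F x + G x).
Proof. intros [L1 H1] [L2 H2]; eexists; apply Lip_plus; eauto. Qed.
Lemma LipE_scal k F c : LipE k F -> LipE k (fun x => c * F x).
Proof. intros [L1 H1]; eexists; apply Lip_scal; eauto. Qed.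
Lemma LipE_const k c : LipE k (fun _ => c).
Proof. eexists; apply Lip_const. Qed.
Lemma LipE_minus k F G : LipE k F -> LipE k G -> LipE k (fun x => F x - G x).
Proof. intros HF HG. destruct (LipE_plus k F (fun x => -1 * G x) HF (LipE_scal k G (-1) HG)) as [L HL].
  exists L. destruct HL as [h H]; split; auto. intros x y hx hy.
  replace (F x - G x - (F y - G y)) with (F x + -1 * G x - (F y + -1 * G y)) by ring. auto. Qed.
Lemma LipE_ext k F G : LipE k F -> (forall x, length x = k -> F x = G x) -> LipE k G.
Proof. intros [L [h H]] E; exists L; split; auto. intros x y hx hy. rewrite <- !E by auto. auto. Qed.

Lemma LipE_comp k F phi K : LipE k F -> 0 <= K ->
  (forall a b, Rabs (phi a - phi b) <= K * Rabs (a - b)) -> LipE k (fun x => phi (F x)).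
Proof. intros [L [hL H]] hK Hphi. exists (K*L). split; [nra|]. intros x y hx hy.
  eapply Rle_trans; [apply Hphi|]. specialize (H x y hx hy). rewrite Rmult_assoc.
  apply Rmult_le_compat_l; auto. Qed.

Lemma LipE_comp_on k F phi K B : LipE k F -> 0 <= K ->
  (forall x, length x = k -> 0 <= F x <= B) ->
  (forall a b, 0 <= a <= B -> 0 <= b <= B -> Rabs (phi a - phi b) <= K * Rabs (a - b)) ->
  LipE k (fun x => phi (F x)).
Proof. intros [L [hL H]] hK HB Hphi. exists (K*L). split; [nra|]. intros x y hx hy.
  eapply Rle_trans; [apply Hphi; auto|]. specialize (H x y hx hy). rewrite Rmult_assoc.
  apply Rmult_le_compat_l; auto. Qed.

Lemma intT_plusE k F G : LipE k F -> LipE k G ->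
  intT k (fun x => F x + G x) = intT k F + intT k G.
Proof. intros [L1 H1] [L2 H2]; eapply intT_plus; eauto. Qed.
Lemma intT_scalE k F c : LipE k F -> intT k (fun x => c * F x) = c * intT k F.
Proof. intros [L1 H1]; eapply intT_scal; eauto. Qed.
Lemma intT_leE k F G : LipE k F -> LipE k G ->
  (forall x, length x = k -> F x <= G x) -> intT k F <= intT k G.
Proof. intros [L1 H1] [L2 H2]; eapply intT_le; eauto. Qed.
Lemma intT_minusE k F G : LipE k F -> LipE k G ->
  intT k (fun x => F x - G x) = intT k F - intT k G.
Proof. intros HF HG.
  rewrite (intT_ext k _ (fun x => F x + (-1) * G x)) by (intros; ring).
  rewrite intT_plusE; auto. rewrite intT_scalE; auto. ring. apply LipE_scal; auto. Qed.
Lemma intT_ge0 k F : LipE k F -> (forall x, length x = k -> 0 <= F x) -> 0 <= intT k F.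
Proof. intros HF H. rewrite <- (intT_const k 0). apply intT_leE; auto. apply LipE_const. Qed.
Lemma intT_ub k F B : LipE k F -> (forall x, length x = k -> F x <= B) -> intT k F <= B.
Proof. intros HF H. rewrite <- (intT_const k B). apply intT_leE; auto. apply LipE_const. Qed.
Lemma intT_abs_le k F G : LipE k F -> LipE k G ->
  (forall x, length x = k -> Rabs (F x) <= G x) -> Rabs (intT k F) <= intT k G.
Proof. intros HF HG H. apply Rabs_le. split.
  - rewrite <- (Rmult_1_l (intT k F)). replace (- intT k G) with ((-1) * intT k G) by ring.
    rewrite <- !intT_scalE by auto. apply intT_leE; try apply LipE_scal; auto.
    intros x hx; specialize (H x hx); apply Rabs_le_between in H; lra.
  - apply intT_leE; auto. intros x hx; specialize (H x hx); apply Rabs_le_between in H; lra.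
Qed.

Fixpoint zabs (l : list Z) : R := match l with [] => 0 | z :: l' => Rabs (IZR z) + zabs l' end.
Lemma zabs_ge0 l : 0 <= zabs l.
Proof. induction l; simpl; [lra|]. pose proof (Rabs_pos (IZR a)); lra. Qed.

Lemma dot_Lip eta : forall x y, length x = length y ->
  Rabs (dotRZ x eta - dotRZ y eta) <= zabs eta * ldist x y.
Proof.
  induction eta as [|z eta IH]; intros x y hl.
  - assert (E: forall x, dotRZ x [] = 0) by (destruct x0; reflexivity). rewrite !E.
    unfold Rminus; rewrite Rplus_opp_r, Rabs_R0; simpl. lra.
  - destruct x as [|a x], y as [|b y]; simpl in *; try discriminate.
    + unfold Rminus; rewrite Rplus_opp_r, Rabs_R0. pose proof (zabs_ge0 eta); pose proof (Rabs_pos (IZR z)); lra.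
    + injection hl as hl. specialize (IH x y hl).
      replace (a * IZR z + dotRZ x eta - (b * IZR z + dotRZ y eta)) with
        ((a - b) * IZR z + (dotRZ x eta - dotRZ y eta)) by ring.
      eapply Rle_trans; [apply Rabs_triang|]. rewrite Rabs_mult.
      pose proof (zabs_ge0 eta); pose proof (Rabs_pos (IZR z)); pose proof (Rabs_pos (a - b));
      pose proof (ldist_ge0 x y). nra.
Qed.

Lemma LipE_dot k eta : LipE k (fun x => dotRZ x eta).
Proof. exists (zabs eta). split; [apply zabs_ge0|]. intros x y hx hy. apply dot_Lip; congruence. Qed.

Lemma cos_Lip a b : Rabs (cos a - cos b) <= Rabs (a - b).
Proof. destruct (MVT_abs cos (fun c => - sin c) b a) as [c [Hc _]].
  { intros; apply derivable_pt_lim_cos. }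
  rewrite Hc. pose proof (SIN_bound c). rewrite Rabs_Ropp.
  rewrite <- (Rmult_1_l (Rabs (a - b))) at 2.
  apply Rmult_le_compat_r; [apply Rabs_pos|]. apply Rabs_le; lra. Qed.
Lemma sin_Lip a b : Rabs (sin a - sin b) <= Rabs (a - b).
Proof. destruct (MVT_abs sin cos b a) as [c [Hc _]].
  { intros; apply derivable_pt_lim_sin. }
  rewrite Hc. pose proof (COS_bound c).
  rewrite <- (Rmult_1_l (Rabs (a - b))) at 2.
  apply Rmult_le_compat_r; [apply Rabs_pos|]. apply Rabs_le; lra. Qed.

Lemma LipE_cos2pi k F : LipE k F -> LipE k (fun x => cos (2 * PI * F x)).
Proof. intros HF. apply (LipE_comp k F (fun a => cos (2*PI*a)) (2*PI)); auto.
  pose proof PI_RGT_0; lra. intros a b. eapply Rle_trans; [apply cos_Lip|].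
  replace (2*PI*a - 2*PI*b) with ((2*PI)*(a-b)) by ring. rewrite Rabs_mult.
  rewrite (Rabs_right (2*PI)); pose proof PI_RGT_0; lra. Qed.
Lemma LipE_sin2pi k F : LipE k F -> LipE k (fun x => sin (2 * PI * F x)).
Proof. intros HF. apply (LipE_comp k F (fun a => sin (2*PI*a)) (2*PI)); auto.
  pose proof PI_RGT_0; lra. intros a b. eapply Rle_trans; [apply sin_Lip|].
  replace (2*PI*a - 2*PI*b) with ((2*PI)*(a-b)) by ring. rewrite Rabs_mult.
  rewrite (Rabs_right (2*PI)); pose proof PI_RGT_0; lra. Qed.

Lemma LipE_sum {A} k (F : A -> list R -> R) (l : list A) :
  (forall a, In a l -> LipE k (F a)) ->
  LipE k (fun x => fold_right Rplus 0 (map (fun a => F a x) l)).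
Proof. induction l as [|a l IH]; intros H; simpl.
  - apply LipE_const.
  - apply LipE_plus; [apply H; simpl; auto| apply IH; intros; apply H; simpl; auto]. Qed.

Lemma intT_sum {A} k (F : A -> list R -> R) (l : list A) :
  (forall a, In a l -> LipE k (F a)) ->
  intT k (fun x => fold_right Rplus 0 (map (fun a => F a x) l)) =
  fold_right Rplus 0 (map (fun a => intT k (F a)) l).
Proof. induction l as [|a l IH]; intros H; simpl.
  - apply intT_const.
  - rewrite intT_plusE; [rewrite IH; auto| apply H; simpl; auto| apply LipE_sum; intros; apply H; simpl; auto].
    intros; apply H; simpl; auto. Qed.

Open Scope R_scope.

Lemma sin_2pi_int z : sin (2*PI*IZR z) = 0.
Proof. apply sin_eq_0_1. exists (2*z)%Z. rewrite mult_IZR. simpl. ring. Qed.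
Lemma cos_2pi_int z : cos (2*PI*IZR z) = 1.
Proof. replace (2*PI*IZR z) with (2*(PI*IZR z)) by ring. rewrite cos_2a_sin.
  rewrite sin_eq_0_1; [ring|]. exists z; ring. Qed.

Lemma RIcos z : RInt (fun t => cos (2*PI*(t*IZR z))) 0 1 = if Z.eq_dec z 0 then 1 else 0.
Proof.
  destruct (Z.eq_dec z 0) as [->|hz].
  - rewrite (RInt_ext _ (fun _ => 1)). apply RInt01_const.
    intros t _. rewrite !Rmult_0_r. apply cos_0.
  - assert (hz' : IZR z <> 0) by (apply not_0_IZR; auto).
    pose proof PI_RGT_0.
    set (f := fun t => sin (2*PI*(t*IZR z)) / (2*PI*IZR z)).
    assert (HI : is_RInt (fun t => cos (2*PI*(t*IZR z))) 0 1 (minus (f 1) (f 0))).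
    { apply (@is_RInt_derive R_CompleteNormedModule).
      * intros x _. unfold f. auto_derive; auto. field. split; auto; lra.
      * intros x _. apply (@ex_derive_continuous R_AbsRing R_NormedModule). auto_derive; auto. }
    apply (@is_RInt_unique R_CompleteNormedModule) in HI. rewrite HI. unfold f.
    simpl. unfold minus, plus, opp; simpl. rewrite Rmult_1_l, Rmult_0_l, Rmult_0_r, sin_0.
    rewrite sin_2pi_int. field. split; auto; lra.
Qed.

Lemma RIsin z : RInt (fun t => sin (2*PI*(t*IZR z))) 0 1 = 0.
Proof.
  destruct (Z.eq_dec z 0) as [->|hz].
  - rewrite (RInt_ext _ (fun _ => 0)). apply RInt01_const.
    intros t _. rewrite !Rmult_0_r. apply sin_0.
  - assert (hz' : IZR z <> 0) by (apply not_0_IZR; auto).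
    pose proof PI_RGT_0.
    set (f := fun t => - cos (2*PI*(t*IZR z)) / (2*PI*IZR z)).
    assert (HI : is_RInt (fun t => sin (2*PI*(t*IZR z))) 0 1 (minus (f 1) (f 0))).
    { apply (@is_RInt_derive R_CompleteNormedModule).
      * intros x _. unfold f. auto_derive; auto. field. split; auto; lra.
      * intros x _. apply (@ex_derive_continuous R_AbsRing R_NormedModule). auto_derive; auto. }
    apply (@is_RInt_unique R_CompleteNormedModule) in HI. rewrite HI. unfold f.
    simpl. unfold minus, plus, opp; simpl. rewrite Rmult_1_l, Rmult_0_l, Rmult_0_r, cos_0.
    rewrite cos_2pi_int. field. split; auto; lra.
Qed.

Lemma LipE_D k eta xi : LipE k (fun y => dotRZ y eta - dotRZ y xi).
Proof. apply LipE_minus; apply LipE_dot. Qed.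

Lemma orth k : forall eta xi, length eta = k -> length xi = k ->
  intT k (fun x => cos (2*PI*(dotRZ x eta - dotRZ x xi))) =
    (if list_eq_dec Z.eq_dec eta xi then 1 else 0) /\
  intT k (fun x => sin (2*PI*(dotRZ x eta - dotRZ x xi))) = 0.
Proof.
  induction k as [|k IH]; intros eta xi he hx.
  - destruct eta; [|discriminate]. destruct xi; [|discriminate]. simpl.
    rewrite Rminus_0_r, Rmult_0_r, cos_0, sin_0. auto.
  - destruct eta as [|a eta]; [discriminate|]. destruct xi as [|b xi]; [discriminate|].
    simpl in he, hx. injection he as he. injection hx as hx.
    destruct (IH eta xi he hx) as [Hc Hs].
    set (z := (a - b)%Z).
    assert (Ea : forall t y, 2*PI*(dotRZ (t::y) (a::eta) - dotRZ (t::y) (b::xi)) =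
                  2*PI*(t*IZR z) + 2*PI*(dotRZ y eta - dotRZ y xi)).
    { intros t y. simpl. unfold z. rewrite minus_IZR. ring. }
    assert (Ic : forall t, intT k (fun y => cos (2*PI*(dotRZ (t::y) (a::eta) - dotRZ (t::y) (b::xi)))) =
               cos (2*PI*(t*IZR z)) * (if list_eq_dec Z.eq_dec eta xi then 1 else 0)).
    { intros t. rewrite (intT_ext k _ (fun y => cos (2*PI*(t*IZR z)) * cos (2*PI*(dotRZ y eta - dotRZ y xi))
                  + (- sin (2*PI*(t*IZR z))) * sin (2*PI*(dotRZ y eta - dotRZ y xi)))).
      - rewrite intT_plusE by (apply LipE_scal; first [apply LipE_cos2pi | apply LipE_sin2pi]; apply LipE_D).
        rewrite !intT_scalE by (first [apply LipE_cos2pi | apply LipE_sin2pi]; apply LipE_D).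
        rewrite Hc, Hs. ring.
      - intros y _. rewrite Ea, cos_plus. ring. }
    assert (Is : forall t, intT k (fun y => sin (2*PI*(dotRZ (t::y) (a::eta) - dotRZ (t::y) (b::xi)))) =
               sin (2*PI*(t*IZR z)) * (if list_eq_dec Z.eq_dec eta xi then 1 else 0)).
    { intros t. rewrite (intT_ext k _ (fun y => sin (2*PI*(t*IZR z)) * cos (2*PI*(dotRZ y eta - dotRZ y xi))
                  + cos (2*PI*(t*IZR z)) * sin (2*PI*(dotRZ y eta - dotRZ y xi)))).
      - rewrite intT_plusE by (apply LipE_scal; first [apply LipE_cos2pi | apply LipE_sin2pi]; apply LipE_D).
        rewrite !intT_scalE by (first [apply LipE_cos2pi | apply LipE_sin2pi]; apply LipE_D).
        rewrite Hc, Hs. ring.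
      - intros y _. rewrite Ea, sin_plus. ring. }
    split.
    + change (RInt (fun t => intT k (fun y => cos (2*PI*(dotRZ (t::y) (a::eta) - dotRZ (t::y) (b::xi))))) 0 1 =
              (if list_eq_dec Z.eq_dec (a::eta) (b::xi) then 1 else 0)).
      rewrite (@RInt_ext R_CompleteNormedModule _ _ _ _ (fun t _ => Ic t)).
      destruct (list_eq_dec Z.eq_dec eta xi) as [e|ne].
      * rewrite (@RInt_ext R_CompleteNormedModule _ (fun t => cos (2*PI*(t*IZR z)))) by (intros; apply Rmult_1_r).
        rewrite RIcos. subst xi. unfold z.
        destruct (Z.eq_dec (a - b) 0) as [e1|ne1]; destruct (list_eq_dec Z.eq_dec (a::eta) (b::eta)) as [e'|ne'].
        -- reflexivity.
        -- exfalso; apply ne'. replace b with a by lia. reflexivity.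
        -- exfalso. injection e' as e'. lia.
        -- reflexivity.
      * rewrite (@RInt_ext R_CompleteNormedModule _ (fun t => 0)) by (intros; apply Rmult_0_r). rewrite RInt01_const.
        destruct (list_eq_dec Z.eq_dec (a::eta) (b::xi)) as [e'|ne']; auto.
        injection e' as e1 e2; contradiction.
    + change (RInt (fun t => intT k (fun y => sin (2*PI*(dotRZ (t::y) (a::eta) - dotRZ (t::y) (b::xi))))) 0 1 = 0).
      rewrite (@RInt_ext R_CompleteNormedModule _ _ _ _ (fun t _ => Is t)).
      destruct (list_eq_dec Z.eq_dec eta xi) as [e|ne].
      * rewrite (@RInt_ext R_CompleteNormedModule _ (fun t => sin (2*PI*(t*IZR z)))) by (intros; apply Rmult_1_r). apply RIsin.
      * rewrite (@RInt_ext R_CompleteNormedModule _ (fun t => 0)) by (intros; apply Rmult_0_r). apply RInt01_const.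
Qed.

Open Scope R_scope.

Definition tpoly (L : list (list Z)) (c : list Z -> C) (x : list R) : C :=
  fold_right Cplus 0%C (map (fun xi => Cmult (cexp2pi (dotRZ x xi)) (c xi)) L).
Definition csn (L : list (list Z)) (c : list Z -> C) : R :=
  fold_right Rplus 0 (map (fun xi => Cmod (c xi)) L).

Lemma csn_ge0 L c : 0 <= csn L c.
Proof. unfold csn; induction L; simpl; [lra|]. pose proof (Cmod_ge_0 (c a)); lra. Qed.

Lemma im_le_Cmod' u : Rabs (snd u) <= Cmod u.
Proof. unfold Cmod. rewrite <- sqrt_Rsqr_abs. apply sqrt_le_1_alt. unfold Rsqr. nra. Qed.
Lemma re_le_Cmod' u : Rabs (fst u) <= Cmod u.
Proof. unfold Cmod. rewrite <- sqrt_Rsqr_abs. apply sqrt_le_1_alt. unfold Rsqr. nra. Qed.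
Lemma Cmod_le_ReIm u : Cmod u <= Rabs (fst u) + Rabs (snd u).
Proof. unfold Cmod. rewrite <- (sqrt_Rsqr (Rabs (fst u) + Rabs (snd u))).
  2: { pose proof (Rabs_pos (fst u)); pose proof (Rabs_pos (snd u)); lra. }
  apply sqrt_le_1_alt. unfold Rsqr. destruct u as [a b]; simpl.
  unfold Rabs; destruct (Rcase_abs a); destruct (Rcase_abs b); nra. Qed.
Lemma Cmod_cexp t : Cmod (cexp2pi t) = 1.
Proof. unfold Cmod, cexp2pi; simpl. pose proof (sin2_cos2 (2*PI*t)) as H. unfold Rsqr in H.
  replace (cos (2 * PI * t) * (cos (2 * PI * t) * 1) + sin (2 * PI * t) * (sin (2 * PI * t) * 1)) with 1 by nra.
  apply sqrt_1. Qed.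
Lemma Cmod_rev u v : Cmod u - Cmod v <= Cmod (u - v)%C.
Proof. replace u with (v + (u - v))%C at 1 by ring. pose proof (Cmod_triangle v (u - v)%C). lra. Qed.
Lemma Cmod_rev_abs u v : Rabs (Cmod u - Cmod v) <= Cmod (u - v)%C.
Proof. apply Rabs_le. pose proof (Cmod_rev u v). pose proof (Cmod_rev v u).
  replace (v - u)%C with (-1 * (u - v))%C in H0 by ring. rewrite Cmod_mult in H0.
  replace (Cmod (-1)) with 1 in H0. lra. unfold Cmod; simpl. replace ((-1) * ((-1) * 1) + 0 * (0 * 1)) with 1 by ring.
  rewrite sqrt_1; auto. Qed.

Lemma Re_tpoly L c x : fst (tpoly L c x) =
  fold_right Rplus 0 (map (fun xi => cos (2*PI*dotRZ x xi) * fst (c xi) - sin (2*PI*dotRZ x xi) * snd (c xi)) L).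
Proof. induction L; simpl; auto. rewrite <- IHL. reflexivity. Qed.
Lemma Im_tpoly L c x : snd (tpoly L c x) =
  fold_right Rplus 0 (map (fun xi => cos (2*PI*dotRZ x xi) * snd (c xi) + sin (2*PI*dotRZ x xi) * fst (c xi)) L).
Proof. induction L; simpl; auto. rewrite <- IHL. reflexivity. Qed.

Lemma LipE_Re_tpoly k L c : LipE k (fun x => fst (tpoly L c x)).
Proof. eapply LipE_ext; [|intros; symmetry; apply Re_tpoly].
  apply LipE_sum. intros xi _. apply LipE_minus.
  - eapply LipE_ext; [apply (LipE_scal k (fun x => cos (2*PI*dotRZ x xi)) (fst (c xi))); apply (LipE_cos2pi k (fun x => dotRZ x xi)); apply LipE_dot|]. intros; simpl; ring.
  - eapply LipE_ext; [apply (LipE_scal k (fun x => sin (2*PI*dotRZ x xi)) (snd (c xi))); apply (LipE_sin2pi k (fun x => dotRZ x xi)); apply LipE_dot|]. intros; simpl; ring.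
Qed.
Lemma LipE_Im_tpoly k L c : LipE k (fun x => snd (tpoly L c x)).
Proof. eapply LipE_ext; [|intros; symmetry; apply Im_tpoly].
  apply LipE_sum. intros xi _. apply LipE_plus.
  - eapply LipE_ext; [apply (LipE_scal k (fun x => cos (2*PI*dotRZ x xi)) (snd (c xi))); apply (LipE_cos2pi k (fun x => dotRZ x xi)); apply LipE_dot|]. intros; simpl; ring.
  - eapply LipE_ext; [apply (LipE_scal k (fun x => sin (2*PI*dotRZ x xi)) (fst (c xi))); apply (LipE_sin2pi k (fun x => dotRZ x xi)); apply LipE_dot|]. intros; simpl; ring.
Qed.

Lemma LipE_Cmod_tpoly k L c : LipE k (fun x => Cmod (tpoly L c x)).
Proof. destruct (LipE_Re_tpoly k L c) as [L1 [h1 H1]]. destruct (LipE_Im_tpoly k L c) as [L2 [h2 H2]].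
  exists (L1 + L2). split; [lra|]. intros x y hx hy.
  eapply Rle_trans; [apply Cmod_rev_abs|]. eapply Rle_trans; [apply Cmod_le_ReIm|].
  specialize (H1 x y hx hy). specialize (H2 x y hx hy). simpl. unfold Rminus in *. nra. Qed.

Lemma tpoly_bound L c x : Cmod (tpoly L c x) <= csn L c.
Proof. unfold tpoly, csn; induction L; simpl.
  - rewrite Cmod_0. lra.
  - eapply Rle_trans; [apply Cmod_triangle|]. rewrite Cmod_mult, Cmod_cexp. lra. Qed.

Lemma LipE_rpow_tpoly k L c p : 1 <= p -> LipE k (fun x => rpow (Cmod (tpoly L c x)) p).
Proof. intros hp.
  apply (LipE_comp_on k _ (fun u => rpow u p) (p * rpow (csn L c + 1) (p - 1)) (csn L c)).
  - apply LipE_Cmod_tpoly.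
  - pose proof (rpow_ge0 (csn L c + 1) (p - 1)); nra.
  - intros x _. split; [apply Cmod_ge_0| apply tpoly_bound].
  - intros a b ha hb. apply rpow_Lip; auto. apply csn_ge0. Qed.

Lemma Lpnorm_ge0 k p g : 0 <= Lpnorm k p g.
Proof. apply rpow_ge0. Qed.

Lemma Lpnorm_ub k L c p : 1 <= p -> Lpnorm k p (tpoly L c) <= csn L c.
Proof. intros hp. unfold Lpnorm.
  assert (I0 : 0 <= intT k (fun x => rpow (Cmod (tpoly L c x)) p)).
  { apply intT_ge0; [apply LipE_rpow_tpoly; auto| intros; apply rpow_ge0]. }
  assert (I1 : intT k (fun x => rpow (Cmod (tpoly L c x)) p) <= rpow (csn L c) p).
  { apply intT_ub; [apply LipE_rpow_tpoly; auto|]. intros x _. apply rpow_le; [|lra].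
    split; [apply Cmod_ge_0|apply tpoly_bound]. }
  pose proof (csn_ge0 L c).
  rewrite <- (rpow_inv (csn L c) p) by lra.
  apply rpow_le; [lra|]. apply Rlt_le, Rinv_0_lt_compat; lra. Qed.

Lemma L1_le_Lp k F p : 1 <= p -> LipE k F -> LipE k (fun x => rpow (F x) p) ->
  (forall x, length x = k -> 0 <= F x) ->
  intT k F <= rpow (intT k (fun x => rpow (F x) p)) (/ p).
Proof.
  intros hp HF HFp Hpos.
  set (I := intT k (fun x => rpow (F x) p)).
  assert (I0 : 0 <= I) by (apply intT_ge0; auto; intros; apply rpow_ge0).
  assert (Y : forall A, 0 < A -> intT k F <= A * (1 - / p) + / p * rpow A (1 - p) * I).
  { intros A hA. unfold I. rewrite <- intT_scalE by auto.
    rewrite <- (intT_const k (A * (1 - / p))). rewrite <- intT_plusE by (try apply LipE_scal; auto; apply LipE_const).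
    apply intT_leE; auto. { apply LipE_plus; [apply LipE_const| apply LipE_scal; auto]. }
    intros x hx. apply young; auto. }
  assert (hp' : 0 < / p) by (apply Rinv_0_lt_compat; lra).
  assert (hp1 : / p <= 1) by (rewrite <- Rinv_1; apply Rinv_le_contravar; lra).
  destruct (Req_dec I 0) as [EI|NI].
  - rewrite EI, rpow_le0 by lra. destruct (Rle_lt_dec (intT k F) 0) as [h|h]; auto.
    specialize (Y (intT k F / 2) ltac:(lra)). rewrite EI, Rmult_0_r, Rplus_0_r in Y. nra.
  - set (A := rpow I (/ p)). assert (hA : 0 < A) by (apply rpow_gt0; lra).
    specialize (Y A hA).
    assert (E : rpow A (1 - p) * I = A).
    { unfold A. rewrite rpow_rpow by lra.
      rewrite <- (rpow_1 I) at 2 by lra. rewrite <- rpow_plus by lra. f_equal. field. lra. }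
    rewrite Rmult_assoc, E in Y. fold A. lra.
Qed.

Open Scope R_scope.

Definition rsum {A} (l : list A) (f : A -> R) : R := fold_right Rplus 0 (map f l).

Lemma sum_lin {A} (l : list A) f g a b :
  a * rsum l f + b * rsum l g = rsum l (fun x => a * f x + b * g x).
Proof. unfold rsum; induction l; simpl; [ring|]. rewrite <- IHl. ring. Qed.

Lemma sum_delta0 (L : list (list Z)) (v : list Z -> R) xi : ~ In xi L ->
  rsum L (fun eta => v eta * (if list_eq_dec Z.eq_dec eta xi then 1 else 0)) = 0.
Proof. unfold rsum; induction L as [|e L IH]; simpl; intros H; [auto|].
  destruct (list_eq_dec Z.eq_dec e xi); [exfalso; apply H; auto|]. rewrite IH; [ring|]. auto. Qed.

Lemma sum_delta (L : list (list Z)) (v : list Z -> R) xi : NoDup L -> In xi L ->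
  rsum L (fun eta => v eta * (if list_eq_dec Z.eq_dec eta xi then 1 else 0)) = v xi.
Proof. induction L as [|e L IH]; intros hN hI; [destruct hI|].
  inversion hN; subst. unfold rsum; simpl. fold (rsum L (fun eta => v eta * (if list_eq_dec Z.eq_dec eta xi then 1 else 0))).
  destruct (list_eq_dec Z.eq_dec e xi) as [->|ne].
  - rewrite sum_delta0 by auto. ring.
  - destruct hI as [->|hI]; [congruence|]. rewrite IH; auto. ring. Qed.

Definition reform L c xi x :=
  rsum L (fun eta => fst (c eta) * cos (2*PI*(dotRZ x eta - dotRZ x xi)) - snd (c eta) * sin (2*PI*(dotRZ x eta - dotRZ x xi))).
Definition imform L c xi x :=
  rsum L (fun eta => fst (c eta) * sin (2*PI*(dotRZ x eta - dotRZ x xi)) + snd (c eta) * cos (2*PI*(dotRZ x eta - dotRZ x xi))).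

Lemma reform_eq L c xi x :
  reform L c xi x = fst (Cmult (tpoly L c x) (Cconj (cexp2pi (dotRZ x xi)))).
Proof. unfold reform. simpl. rewrite Re_tpoly, Im_tpoly.
  change (fold_right Rplus 0 (map ?f L)) with (rsum L f).
  replace (rsum L (fun xi0 => cos (2 * PI * dotRZ x xi0) * fst (c xi0) - sin (2 * PI * dotRZ x xi0) * snd (c xi0)) *
   cos (2 * PI * dotRZ x xi) -
   rsum L (fun xi0 => cos (2 * PI * dotRZ x xi0) * snd (c xi0) + sin (2 * PI * dotRZ x xi0) * fst (c xi0)) *
   - sin (2 * PI * dotRZ x xi)) with
   (cos (2 * PI * dotRZ x xi) * rsum L (fun xi0 => cos (2 * PI * dotRZ x xi0) * fst (c xi0) - sin (2 * PI * dotRZ x xi0) * snd (c xi0)) + sin (2 * PI * dotRZ x xi) * 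
   rsum L (fun xi0 => cos (2 * PI * dotRZ x xi0) * snd (c xi0) + sin (2 * PI * dotRZ x xi0) * fst (c xi0))) by ring.
  rewrite sum_lin. unfold rsum. f_equal. apply map_ext. intros eta.
  replace (2 * PI * (dotRZ x eta - dotRZ x xi)) with (2 * PI * dotRZ x eta - 2 * PI * dotRZ x xi) by ring.
  rewrite cos_minus, sin_minus. ring. Qed.

Lemma imform_eq L c xi x :
  imform L c xi x = snd (Cmult (tpoly L c x) (Cconj (cexp2pi (dotRZ x xi)))).
Proof. unfold imform. simpl. rewrite Re_tpoly, Im_tpoly.
  change (fold_right Rplus 0 (map ?f L)) with (rsum L f).
  replace (rsum L (fun xi0 => cos (2 * PI * dotRZ x xi0) * fst (c xi0) - sin (2 * PI * dotRZ x xi0) * snd (c xi0)) *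
   - sin (2 * PI * dotRZ x xi) +
   rsum L (fun xi0 => cos (2 * PI * dotRZ x xi0) * snd (c xi0) + sin (2 * PI * dotRZ x xi0) * fst (c xi0)) *
   cos (2 * PI * dotRZ x xi)) with
   ((- sin (2 * PI * dotRZ x xi)) * rsum L (fun xi0 => cos (2 * PI * dotRZ x xi0) * fst (c xi0) - sin (2 * PI * dotRZ x xi0) * snd (c xi0)) + cos (2 * PI * dotRZ x xi) * 
   rsum L (fun xi0 => cos (2 * PI * dotRZ x xi0) * snd (c xi0) + sin (2 * PI * dotRZ x xi0) * fst (c xi0))) by ring.
  rewrite sum_lin. unfold rsum. f_equal. apply map_ext. intros eta.
  replace (2 * PI * (dotRZ x eta - dotRZ x xi)) with (2 * PI * dotRZ x eta - 2 * PI * dotRZ x xi) by ring.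
  rewrite cos_minus, sin_minus. ring. Qed.

Lemma LipE_reform k L c xi : LipE k (reform L c xi).
Proof. unfold reform, rsum. apply LipE_sum. intros eta _. apply LipE_minus; apply LipE_scal;
  first [apply (LipE_cos2pi k (fun x => dotRZ x eta - dotRZ x xi))|apply (LipE_sin2pi k (fun x => dotRZ x eta - dotRZ x xi))];
  apply LipE_D. Qed.
Lemma LipE_imform k L c xi : LipE k (imform L c xi).
Proof. unfold imform, rsum. apply LipE_sum. intros eta _. apply LipE_plus; apply LipE_scal;
  first [apply (LipE_cos2pi k (fun x => dotRZ x eta - dotRZ x xi))|apply (LipE_sin2pi k (fun x => dotRZ x eta - dotRZ x xi))];
  apply LipE_D. Qed.

Lemma int_reform n L c xi : NoDup L -> (forall eta, In eta L -> length eta = n) -> In xi L ->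
  intT n (reform L c xi) = fst (c xi).
Proof. intros hN hL hI. unfold reform, rsum.
  rewrite intT_sum.
  2: { intros eta _. apply LipE_minus; apply LipE_scal;
  first [apply (LipE_cos2pi n (fun x => dotRZ x eta - dotRZ x xi))|apply (LipE_sin2pi n (fun x => dotRZ x eta - dotRZ x xi))];
  apply LipE_D. }
  rewrite <- (sum_delta L (fun eta => fst (c eta)) xi hN hI). unfold rsum. f_equal. apply map_ext_in.
  intros eta he. rewrite intT_minusE by (apply LipE_scal;
  first [apply (LipE_cos2pi n (fun x => dotRZ x eta - dotRZ x xi))|apply (LipE_sin2pi n (fun x => dotRZ x eta - dotRZ x xi))];
  apply LipE_D).
  rewrite !intT_scalE by
  (first [apply (LipE_cos2pi n (fun x => dotRZ x eta - dotRZ x xi))|apply (LipE_sin2pi n (fun x => dotRZ x eta - dotRZ x xi))];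
  apply LipE_D).
  destruct (orth n eta xi (hL eta he) (hL xi hI)) as [Hc Hs]. rewrite Hc, Hs. ring. Qed.

Lemma int_imform n L c xi : NoDup L -> (forall eta, In eta L -> length eta = n) -> In xi L ->
  intT n (imform L c xi) = snd (c xi).
Proof. intros hN hL hI. unfold imform, rsum.
  rewrite intT_sum.
  2: { intros eta _. apply LipE_plus; apply LipE_scal;
  first [apply (LipE_cos2pi n (fun x => dotRZ x eta - dotRZ x xi))|apply (LipE_sin2pi n (fun x => dotRZ x eta - dotRZ x xi))];
  apply LipE_D. }
  rewrite <- (sum_delta L (fun eta => snd (c eta)) xi hN hI). unfold rsum. f_equal. apply map_ext_in.
  intros eta he. rewrite intT_plusE by (apply LipE_scal;
  first [apply (LipE_cos2pi n (fun x => dotRZ x eta - dotRZ x xi))|apply (LipE_sin2pi n (fun x => dotRZ x eta - dotRZ x xi))];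
  apply LipE_D).
  rewrite !intT_scalE by
  (first [apply (LipE_cos2pi n (fun x => dotRZ x eta - dotRZ x xi))|apply (LipE_sin2pi n (fun x => dotRZ x eta - dotRZ x xi))];
  apply LipE_D).
  destruct (orth n eta xi (hL eta he) (hL xi hI)) as [Hc Hs]. rewrite Hc, Hs. ring. Qed.

Lemma Cmod_conj_cexp u t : Cmod (Cmult u (Cconj (cexp2pi t))) = Cmod u.
Proof. rewrite Cmod_mult, Cmod_conj, Cmod_cexp. ring. Qed.

Lemma L1_le_Lpnorm n L c p : 1 <= p ->
  intT n (fun x => Cmod (tpoly L c x)) <= Lpnorm n p (tpoly L c).
Proof. intros hp. unfold Lpnorm. apply L1_le_Lp; auto.
  apply LipE_Cmod_tpoly. apply LipE_rpow_tpoly; auto. intros; apply Cmod_ge_0. Qed.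

Lemma coef_bound n L c p xi : 1 <= p -> NoDup L -> (forall eta, In eta L -> length eta = n) -> In xi L ->
  Cmod (c xi) <= 2 * Lpnorm n p (tpoly L c).
Proof.
  intros hp hN hL hI. pose proof (L1_le_Lpnorm n L c p hp).
  assert (R1 : Rabs (fst (c xi)) <= intT n (fun x => Cmod (tpoly L c x))).
  { rewrite <- (int_reform n L c xi) by auto. apply intT_abs_le; [apply LipE_reform|apply LipE_Cmod_tpoly|].
    intros x _. rewrite reform_eq. rewrite <- (Cmod_conj_cexp (tpoly L c x) (dotRZ x xi)). apply re_le_Cmod'. }
  assert (R2 : Rabs (snd (c xi)) <= intT n (fun x => Cmod (tpoly L c x))).
  { rewrite <- (int_imform n L c xi) by auto. apply intT_abs_le; [apply LipE_imform|apply LipE_Cmod_tpoly|].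
    intros x _. rewrite imform_eq. rewrite <- (Cmod_conj_cexp (tpoly L c x) (dotRZ x xi)). apply im_le_Cmod'. }
  pose proof (Cmod_le_ReIm (c xi)). lra.
Qed.

Open Scope Z_scope.

Definition zl (N : nat) : list Z := map (fun j => Z.of_nat j - Z.of_nat N) (seq 0 (2 * N + 1)).

Lemma In_zl N z : In z (zl N) <-> - Z.of_nat N <= z <= Z.of_nat N.
Proof. unfold zl. rewrite in_map_iff. split.
  - intros [j [<- hj]]. apply in_seq in hj. lia.
  - intros h. exists (Z.to_nat (z + Z.of_nat N)). split; [lia|]. apply in_seq. lia. Qed.

Lemma NoDup_zl N : NoDup (zl N).
Proof. unfold zl. apply NoDup_map_NoDup_ForallPairs; [|apply seq_NoDup].
  intros a b _ _ h. lia. Qed.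

Lemma box_S n N : box (S n) N = flat_map (fun z => map (cons z) (box n N)) (zl N).
Proof. reflexivity. Qed.

Lemma In_box n N xi : In xi (box n N) <->
  length xi = n /\ (forall z, In z xi -> - Z.of_nat N <= z <= Z.of_nat N).
Proof.
  revert xi; induction n as [|n IH]; intros xi.
  - simpl. split.
    + intros [<-|[]]. split; auto. intros z [].
    + intros [h _]. destruct xi; [auto|discriminate].
  - rewrite box_S, in_flat_map. split.
    + intros [z [hz hx]]. apply in_map_iff in hx. destruct hx as [y [<- hy]].
      apply IH in hy. destruct hy as [hl hy]. apply In_zl in hz. split; [simpl; auto|].
      intros w [<-|hw]; auto.
    + intros [hl hz]. destruct xi as [|z xi]; [discriminate|]. exists z. split.
      * apply In_zl. apply hz; simpl; auto.
      * apply in_map. apply IH. split; [simpl in hl; lia|]. intros w hw; apply hz; simpl; auto.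
Qed.

Lemma NoDup_box n N : NoDup (box n N).
Proof.
  induction n as [|n IH]; [simpl; constructor; [intros []|constructor]|].
  rewrite box_S. pose proof (NoDup_zl N) as HZ. induction (zl N) as [|z Zs IHZ]; simpl; [constructor|].
  inversion HZ; subst. apply NoDup_app.
  - apply NoDup_map_NoDup_ForallPairs; auto. intros a b _ _ h; injection h; auto.
  - apply IHZ; auto.
  - intros a ha hb. apply in_map_iff in ha. destruct ha as [y [<- _]].
    apply in_flat_map in hb. destruct hb as [z' [hz' hb]]. apply in_map_iff in hb.
    destruct hb as [y' [e _]]. injection e as e _. subst. contradiction.
Qed.

Lemma length_box n N : length (box n N) = ((2 * N + 1) ^ n)%nat.
Proof. induction n; [reflexivity|]. rewrite box_S.
  rewrite (flat_map_constant_length (c := length (box n N))).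
  - unfold zl. rewrite length_map, length_seq, IHn. simpl. lia.
  - intros; apply length_map. Qed.

Lemma normsq_cons z xi : normsq (z :: xi) = z * z + normsq xi.
Proof. reflexivity. Qed.
Lemma normsq_ge0 xi : 0 <= normsq xi.
Proof. induction xi; [simpl; lia|]. rewrite normsq_cons. nia. Qed.
Lemma normsq_coord xi z : In z xi -> z * z <= normsq xi.
Proof. induction xi as [|a xi IH]; [intros []|]. rewrite normsq_cons. intros [<-|h].
  - pose proof (normsq_ge0 xi); lia.
  - specialize (IH h). nia. Qed.

Lemma pow4 k : 4 ^ k = 2 ^ k * 2 ^ k.
Proof. rewrite <- Z.pow_mul_l. reflexivity. Qed.

Lemma block_ub m xi : block m xi = true -> normsq xi < 4 ^ Z.of_nat (S m).
Proof. destruct m; simpl block. { intros h. apply Z.ltb_lt in h. simpl. lia. }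
  intros h. apply andb_prop in h. destruct h as [_ h]. apply Z.ltb_lt in h. auto. Qed.
Lemma block_lb m xi : (1 <= m)%nat -> block m xi = true -> 4 ^ Z.of_nat m <= normsq xi.
Proof. destruct m; [lia|]. simpl block. intros _ h. apply andb_prop in h. destruct h as [h _].
  apply Z.leb_le in h. auto. Qed.

Lemma block_intro m xi : (m = O \/ 4 ^ Z.of_nat m <= normsq xi) -> normsq xi < 4 ^ Z.of_nat (S m) ->
  block m xi = true.
Proof. intros h1 h2. destruct m; simpl block.
  - apply Z.ltb_lt. simpl in h2. lia.
  - destruct h1 as [h1|h1]; [discriminate|]. apply andb_true_intro; split; [apply Z.leb_le|apply Z.ltb_lt]; auto. Qed.

Lemma pow4_mono a b : (a <= b)%nat -> 4 ^ Z.of_nat a <= 4 ^ Z.of_nat b.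
Proof. intros; apply Z.pow_le_mono_r; lia. Qed.

Lemma block_unique j j' xi : block j xi = true -> block j' xi = true -> j = j'.
Proof. intros h h'.
  assert (forall a b, (a < b)%nat -> block a xi = true -> block b xi = true -> False).
  { intros a b hab ha hb. pose proof (block_ub a xi ha). pose proof (block_lb b xi ltac:(lia) hb).
    pose proof (pow4_mono (S a) b hab). lia. }
  destruct (Nat.lt_trichotomy j j') as [l|[e|l]]; auto; exfalso; eauto. Qed.

Lemma block_exists J xi : normsq xi < 4 ^ Z.of_nat (S J) -> exists j, (j <= J)%nat /\ block j xi = true.
Proof. induction J as [|J IH]; intros h.
  - exists O; split; auto. apply block_intro; auto.
  - destruct (Z.lt_ge_cases (normsq xi) (4 ^ Z.of_nat (S J))) as [l|g].
    + destruct (IH l) as [j [hj hb]]. exists j; split; auto.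
    + exists (S J); split; auto. apply block_intro; auto. Qed.

Definition E (n j : nat) : list (list Z) := filter (block j) (box n (2 ^ (S j))).

Lemma In_E n j xi : In xi (E n j) <-> length xi = n /\ block j xi = true.
Proof. unfold E. rewrite filter_In, In_box. split.
  - intros [[h _] hb]; auto.
  - intros [hl hb]. split; auto. split; auto. intros z hz.
    pose proof (block_ub j xi hb). pose proof (normsq_coord xi z hz).
    rewrite Nat2Z.inj_pow. rewrite pow4 in *. change (Z.of_nat 2) with 2.
    assert (0 <= 2 ^ Z.of_nat (S j)) by (apply Z.pow_nonneg; lia). nia. Qed.

Lemma NoDup_E n j : NoDup (E n j).
Proof. apply NoDup_filter, NoDup_box. Qed.

Fixpoint Pre (n J : nat) : list (list Z) :=
  match J with O => E n O | S J' => Pre n J' ++ E n (S J') end.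

Lemma In_Pre n J xi : In xi (Pre n J) <-> length xi = n /\ normsq xi < 4 ^ Z.of_nat (S J).
Proof. induction J as [|J IH]; simpl Pre.
  - rewrite In_E. split; intros [h1 h2]; split; auto.
    + apply block_ub; auto.
    + apply block_intro; auto.
  - rewrite in_app_iff, IH, In_E. split.
    + intros [[h1 h2]|[h1 h2]]; split; auto.
      * pose proof (pow4_mono (S J) (S (S J)) ltac:(lia)). lia.
      * apply block_ub; auto.
    + intros [h1 h2]. destruct (Z.lt_ge_cases (normsq xi) (4 ^ Z.of_nat (S J))) as [l|g]; [left; auto|right].
      split; auto. apply block_intro; auto. Qed.

Lemma In_Pre_E n J xi : In xi (Pre n J) <-> exists j, (j <= J)%nat /\ In xi (E n j).
Proof. induction J as [|J IH]; simpl Pre.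
  - split; [intros h; exists O; auto|intros [j [hj h]]; replace j with O in h by lia; auto].
  - rewrite in_app_iff, IH. split.
    + intros [[j [hj h]]|h]; [exists j; split; [lia|auto]|exists (S J); auto].
    + intros [j [hj h]]. destruct (Nat.eq_dec j (S J)) as [->|ne]; [right; auto|left; exists j; split; [lia|auto]]. Qed.

Lemma NoDup_Pre n J : NoDup (Pre n J).
Proof. induction J as [|J IH]; simpl; [apply NoDup_E|]. apply NoDup_app; auto; [apply NoDup_E|].
  intros a ha hb. apply In_Pre_E in ha. destruct ha as [j [hj ha]]. apply In_E in ha. apply In_E in hb.
  pose proof (block_unique _ _ _ (proj2 ha) (proj2 hb)). lia. Qed.

Lemma Pre_prefix n J K : (J <= K)%nat -> exists r, Pre n K = Pre n J ++ r.
Proof. induction 1 as [|K h [r IH]]; [exists []; rewrite app_nil_r; auto|].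
  exists (r ++ E n (S K)). simpl. rewrite IH, app_assoc. auto. Qed.

Open Scope R_scope.

Lemma is_series_ev0 {K : AbsRing} {V : NormedModule K} (u : nat -> V) N :
  (forall k, (N < k)%nat -> u k = zero) -> is_series u (sum_n u N).
Proof. intros H. unfold is_series.
  apply (filterlim_ext_loc (fun _ => sum_n u N)); [|apply filterlim_const].
  exists N. intros m hm. induction hm; auto. rewrite sum_Sn, H by lia. rewrite plus_zero_r. auto. Qed.

Lemma sum_n_ge0 (u : nat -> R) j : (forall k, 0 <= u k) -> 0 <= sum_n u j.
Proof. intros H; induction j; [rewrite sum_O; auto| rewrite sum_Sn]. unfold plus; simpl. specialize (H (S j)); lra. Qed.

Lemma sum_n_ge_term (u : nat -> R) j : (forall k, 0 <= u k) -> u j <= sum_n u j.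
Proof. intros H. destruct j; [rewrite sum_O; lra|]. rewrite sum_Sn. unfold plus; simpl.
  pose proof (sum_n_ge0 u j H); lra. Qed.

Lemma sum_n_le_Series (u : nat -> R) j : (forall k, 0 <= u k) -> ex_series u -> sum_n u j <= Series u.
Proof. intros H hs. assert (L : is_lim_seq (sum_n u) (Series u)) by (apply Series_correct; auto).
  apply (is_lim_seq_incr_compare _ _ L). intros m. rewrite sum_Sn. unfold plus; simpl. specialize (H (S m)); lra. Qed.

Lemma Series_ge_term (u : nat -> R) j : (forall k, 0 <= u k) -> ex_series u -> u j <= Series u.
Proof. intros H hs. eapply Rle_trans; [apply sum_n_ge_term; auto|apply sum_n_le_Series; auto]. Qed.


Lemma Series_ge0' (u : nat -> R) : (forall k, 0 <= u k) -> ex_series u -> 0 <= Series u.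
Proof. intros H hs. eapply Rle_trans; [apply (H O)| apply Series_ge_term; auto]. Qed.

Lemma ex_series_Rscal (k : R) (u : nat -> R) : ex_series u -> ex_series (fun j => k * u j).
Proof. intros h. apply (ex_series_scal_l k) in h. exact h. Qed.
Lemma ex_series_Rplus (u v : nat -> R) : ex_series u -> ex_series v -> ex_series (fun j => u j + v j).
Proof. intros h1 h2. pose proof (ex_series_plus u v h1 h2) as h. exact h. Qed.

Section Besov.
Variables (n : nat) (w p q : R).
Hypothesis hp : 1 <= p.
Hypothesis hq : 0 < q.

Definition lp (c : list Z -> C) (j : nat) : R := Lpnorm n p (blockpoly n c j).

Lemma lp_tpoly c j : lp c j = Lpnorm n p (tpoly (E n j) c).
Proof. reflexivity. Qed.

Lemma lp_ge0 c j : 0 <= lp c j.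
Proof. apply rpow_ge0. Qed.

Lemma lp_ext c d j : (forall xi, In xi (E n j) -> c xi = d xi) -> lp c j = lp d j.
Proof. intros H. rewrite !lp_tpoly. unfold tpoly. f_equal. apply functional_extensionality. intros x.
  f_equal. apply map_ext_in. intros xi hxi. rewrite H; auto. Qed.

Lemma lp_zero (c : list Z -> C) j : (forall xi, In xi (E n j) -> c xi = 0%C) -> lp c j = 0.
Proof. intros H. rewrite lp_tpoly. apply Rle_antisym; [|apply Lpnorm_ge0].
  eapply Rle_trans; [apply Lpnorm_ub; auto|]. unfold csn. clear - H. induction (E n j) as [|a L IH]; simpl; [lra|].
  rewrite H by (simpl; auto). rewrite Cmod_0. rewrite Rplus_0_l. apply IH. intros; apply H; simpl; auto. Qed.

Lemma lp_coef c j xi : In xi (E n j) -> Cmod (c xi) <= 2 * lp c j.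
Proof. intros h. rewrite lp_tpoly. apply coef_bound; auto. apply NoDup_E.
  intros eta he. apply In_E in he. tauto. Qed.

Lemma csn_le L (d : list Z -> C) B : (forall xi, In xi L -> Cmod (d xi) <= B) -> csn L d <= INR (length L) * B.
Proof. unfold csn; induction L as [|a L IH]; intros H; simpl length; simpl fold_right; [simpl; lra|].
  rewrite S_INR. specialize (IH (fun xi h => H xi (or_intror h))). specialize (H a (or_introl eq_refl)). lra. Qed.

Lemma lp_cmp c d j lam : 0 <= lam -> (forall xi, In xi (E n j) -> Cmod (d xi) <= lam * Cmod (c xi)) ->
  lp d j <= 2 * lam * INR (length (E n j)) * lp c j.
Proof. intros hl H. rewrite (lp_tpoly d). eapply Rle_trans; [apply Lpnorm_ub; auto|].
  eapply Rle_trans; [apply (csn_le _ _ (lam * (2 * lp c j)))|].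
  - intros xi hxi. eapply Rle_trans; [apply H; auto|]. apply Rmult_le_compat_l; auto. apply lp_coef; auto.
  - pose proof (pos_INR (length (E n j))). pose proof (lp_ge0 c j). nra. Qed.

Lemma tpoly_scal L l c x : tpoly L (cscal l c) x = Cmult l (tpoly L c x).
Proof. unfold tpoly, cscal; induction L; simpl; [ring|]. rewrite IHL. ring. Qed.
Lemma tpoly_add L c d x : tpoly L (cadd c d) x = Cplus (tpoly L c x) (tpoly L d x).
Proof. unfold tpoly, cadd; induction L; simpl; [ring|]. rewrite IHL. ring. Qed.

Lemma Lpint_ge0 L c : 0 <= intT n (fun x => rpow (Cmod (tpoly L c x)) p).
Proof. apply intT_ge0; [apply LipE_rpow_tpoly; auto| intros; apply rpow_ge0]. Qed.

Lemma lp_scal l c j : lp (cscal l c) j = Cmod l * lp c j.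
Proof. rewrite !lp_tpoly. unfold Lpnorm.
  rewrite (intT_ext n _ (fun x => rpow (Cmod l) p * rpow (Cmod (tpoly (E n j) c x)) p)).
  2: { intros x _. rewrite tpoly_scal, Cmod_mult, rpow_mult; auto; apply Cmod_ge_0. }
  rewrite intT_scalE by (apply LipE_rpow_tpoly; auto).
  rewrite rpow_mult by (try apply rpow_ge0; apply Lpint_ge0).
  rewrite rpow_inv; auto; [apply Cmod_ge_0|lra]. Qed.

Lemma lp_add c d j : lp (cadd c d) j <= 2 * rpow 2 (/ p) * (lp c j + lp d j).
Proof. rewrite !lp_tpoly. unfold Lpnorm.
  set (Ic := intT n (fun x => rpow (Cmod (tpoly (E n j) c x)) p)).
  set (Id := intT n (fun x => rpow (Cmod (tpoly (E n j) d x)) p)).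
  assert (hc : 0 <= Ic) by apply Lpint_ge0. assert (hd : 0 <= Id) by apply Lpint_ge0.
  assert (hpi : 0 < / p) by (apply Rinv_0_lt_compat; lra).
  assert (B : intT n (fun x => rpow (Cmod (tpoly (E n j) (cadd c d) x)) p) <= rpow 2 p * (Ic + Id)).
  { unfold Ic, Id. rewrite <- intT_plusE by (apply LipE_rpow_tpoly; auto).
    rewrite <- intT_scalE by (apply LipE_plus; apply LipE_rpow_tpoly; auto).
    apply intT_leE; [apply LipE_rpow_tpoly; auto| apply LipE_scal, LipE_plus; apply LipE_rpow_tpoly; auto|].
    intros x _. rewrite tpoly_add. eapply Rle_trans; [apply rpow_le; [split; [apply Cmod_ge_0|apply Cmod_triangle]|lra]|].
    apply rpow_sum_le; try apply Cmod_ge_0; lra. }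
  eapply Rle_trans; [apply rpow_le; [split; [apply intT_ge0; [apply LipE_rpow_tpoly; auto| intros; apply rpow_ge0]|exact B]|lra]|].
  rewrite rpow_mult by (try apply rpow_ge0; lra). rewrite rpow_inv by lra.
  pose proof (rpow_sum_le Ic Id (/ p) hc hd ltac:(lra)). lra. Qed.

Definition bt (c : list Z -> C) (j : nat) : R := besov_term n w p q c j.

Lemma bt_ge0 c j : 0 <= bt c j.
Proof. unfold bt, besov_term. apply Rmult_le_pos; [left; apply exp_pos| apply rpow_ge0]. Qed.

Lemma bt_eq c j : bt c j = rpow (Rpower 2 (INR j * w) * lp c j) q.
Proof. unfold bt, besov_term. rewrite rpow_mult by (first [apply lp_ge0 | left; apply exp_pos]).
  rewrite (rpow_pos (Rpower 2 (INR j * w)) q) by apply exp_pos. rewrite Rpower_mult. reflexivity. Qed.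

Lemma bt_cmp c d j mu : 0 <= mu -> lp d j <= mu * lp c j -> bt d j <= rpow mu q * bt c j.
Proof. intros hm H. rewrite !bt_eq. rewrite <- rpow_mult; auto.
  2: { apply Rmult_le_pos; [left; apply exp_pos| apply lp_ge0]. }
  apply rpow_le; [|lra]. split; [apply Rmult_le_pos; [left; apply exp_pos| apply lp_ge0]|].
  pose proof (exp_pos (INR j * w * ln 2)). unfold Rpower. nra. Qed.

Lemma besov_cmp c d K : 0 <= K -> (forall j, bt d j <= K * bt c j) -> in_besov n w p q c ->
  in_besov n w p q d /\ besov_norm n w p q d <= rpow K (/ q) * besov_norm n w p q c.
Proof. intros hK H hc. unfold in_besov in *.
  assert (hd : ex_series (besov_term n w p q d)).
  { apply (@ex_series_le R_AbsRing R_CompleteNormedModule _ (fun j => K * bt c j)).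
    - intros j. unfold norm; simpl; unfold abs; simpl. rewrite Rabs_right by (apply Rle_ge, bt_ge0). apply H.
    - apply (ex_series_scal_l K) in hc. exact hc. }
  split; auto. unfold besov_norm.
  assert (S1 : Series (besov_term n w p q d) <= K * Series (besov_term n w p q c)).
  { rewrite <- Series_scal_l. apply Series_le.
    - intros j; split; [apply bt_ge0| apply H].
    - apply (ex_series_scal_l K) in hc. exact hc. }
  assert (S0 : 0 <= Series (besov_term n w p q d)) by (apply Series_ge0'; auto; intros; apply bt_ge0).
  assert (S2 : 0 <= Series (besov_term n w p q c)) by (apply Series_ge0'; auto; intros; apply bt_ge0).
  rewrite <- rpow_mult; auto. apply rpow_le; [split; auto|].
  left; apply Rinv_0_lt_compat; auto. Qed.

Lemma fs_besov (c : list Z -> C) J : (forall j xi, (J < j)%nat -> In xi (E n j) -> c xi = 0%C) -> in_besov n w p q c.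
Proof. intros H. exists (sum_n (besov_term n w p q c) J). apply (@is_series_ev0 R_AbsRing R_NormedModule).
  intros k hk. change (bt c k = 0). rewrite bt_eq. rewrite lp_zero.
  - rewrite Rmult_0_r. apply rpow_le0; lra.
  - intros xi hxi; apply (H k); auto. Qed.

Lemma besov_add c d : in_besov n w p q c -> in_besov n w p q d -> in_besov n w p q (cadd c d).
Proof. intros hc hd. set (K0 := 2 * rpow 2 (/ p)).
  assert (hK0 : 0 <= K0) by (unfold K0; pose proof (rpow_ge0 2 (/p)); lra).
  apply (@ex_series_le R_AbsRing R_CompleteNormedModule _ (fun j => rpow K0 q * (rpow 2 q * (bt c j + bt d j)))).
  - intros j. unfold norm; simpl; unfold abs; simpl. rewrite Rabs_right by (apply Rle_ge, bt_ge0).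
    change (besov_term n w p q (cadd c d) j) with (bt (cadd c d) j). rewrite !bt_eq.
    set (a := Rpower 2 (INR j * w)). assert (ha : 0 < a) by apply exp_pos.
    pose proof (lp_ge0 c j). pose proof (lp_ge0 d j). pose proof (lp_ge0 (cadd c d) j).
    eapply Rle_trans; [apply (rpow_le _ (K0 * (a * lp c j + a * lp d j))); [split; [nra|]|lra]|].
    { pose proof (lp_add c d j). fold K0 in H2. nra. }
    rewrite rpow_mult by nra. apply Rmult_le_compat_l; [apply rpow_ge0|]. apply rpow_sum_le; nra.
  - apply ex_series_Rscal, ex_series_Rscal, ex_series_Rplus; auto.
Qed.

Lemma besov_scal l c : in_besov n w p q c -> in_besov n w p q (cscal l c).
Proof. intros hc. apply (besov_cmp c _ (rpow (Cmod l) q)); auto.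
  - apply rpow_ge0.
  - intros j. apply bt_cmp; [apply Cmod_ge_0|]. rewrite lp_scal; lra. Qed.

Lemma besov_norm_ge0 c : 0 <= besov_norm n w p q c.
Proof. apply rpow_ge0. Qed.

Lemma lp_le_norm c j : in_besov n w p q c -> lp c j <= Rpower 2 (- (INR j * w)) * besov_norm n w p q c.
Proof. intros hc. unfold besov_norm.
  set (S := Series (besov_term n w p q c)).
  assert (hS : bt c j <= S) by (apply Series_ge_term; auto; intros; apply bt_ge0).
  rewrite bt_eq in hS. set (a := Rpower 2 (INR j * w)) in hS.
  assert (ha : 0 < a) by apply exp_pos.
  pose proof (lp_ge0 c j).
  assert (E1 : Rpower 2 (- (INR j * w)) = / a).
  { unfold a, Rpower. rewrite <- exp_Ropp. f_equal. ring. }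
  rewrite E1.
  assert (E2 : lp c j = / a * rpow (rpow (a * lp c j) q) (/ q)).
  { rewrite rpow_inv by nra. field. lra. }
  rewrite E2. apply Rmult_le_compat_l; [left; apply Rinv_0_lt_compat; auto|].
  apply rpow_le; [split; [apply rpow_ge0|auto]|]. left; apply Rinv_0_lt_compat; auto. Qed.

Lemma coef_norm c j xi : in_besov n w p q c -> In xi (E n j) ->
  Cmod (c xi) <= 2 * Rpower 2 (- (INR j * w)) * besov_norm n w p q c.
Proof. intros hc hx. eapply Rle_trans; [apply lp_coef; eauto|]. pose proof (lp_le_norm c j hc). lra. Qed.

End Besov.

Open Scope Z_scope.

Lemma normsq_repeat0 k : normsq (repeat 0 k) = 0.
Proof. induction k; [reflexivity|]. simpl repeat. rewrite normsq_cons, IHk. lia. Qed.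

Lemma E_nonempty n j : (1 <= n)%nat -> exists xi, In xi (E n j).
Proof. intros hn. destruct n as [|n]; [lia|].
  destruct j as [|j].
  - exists (repeat 0 (S n)). apply In_E. split; [apply repeat_length|].
    apply block_intro; [left; auto|]. rewrite normsq_repeat0. simpl. lia.
  - exists (2 ^ Z.of_nat (S j) :: repeat 0 n). apply In_E. split; [simpl; rewrite repeat_length; auto|].
    apply block_intro; rewrite normsq_cons, normsq_repeat0, Z.add_0_r, <- pow4.
    + right; lia.
    + pose proof (pow4_mono (S j) (S (S j))). assert (4 ^ Z.of_nat (S j) < 4 ^ Z.of_nat (S (S j))).
      { apply Z.pow_lt_mono_r; lia. } lia. Qed.

Lemma Pre_length n J : (1 <= n)%nat -> (S J <= length (Pre n J))%nat.
Proof. intros hn. induction J as [|J IH]; simpl Pre.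
  - destruct (E_nonempty n 0 hn) as [xi hxi]. destruct (E n 0); [destruct hxi|simpl; lia].
  - rewrite length_app. destruct (E_nonempty n (S J) hn) as [xi hxi]. destruct (E n (S J)); [destruct hxi|simpl; lia]. Qed.

Lemma Pre_zero J : Pre 0 J = [[]].
Proof. induction J as [|J IH]; [reflexivity|]. simpl Pre. rewrite IH.
  unfold E. change (box 0 (2 ^ S (S J))) with [@nil Z]. 
  assert (H : block (S J) [] = false).
  { change (block (S J) []) with (andb (4 ^ Z.of_nat (S J) <=? normsq []) (normsq [] <? 4 ^ Z.of_nat (S (S J)))). assert (E1 : (4 ^ Z.of_nat (S J) <=? normsq []) = false).
    { apply Z.leb_gt. simpl normsq. apply Z.pow_pos_nonneg; lia. } rewrite E1. reflexivity. }
  unfold filter. rewrite H. reflexivity. Qed.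

Definition en (n k : nat) : option (list Z) := nth_error (Pre n k) k.

Lemma en_lt n k xi : en n k = Some xi -> (k < length (Pre n k))%nat.
Proof. unfold en; intros h. apply nth_error_Some. congruence. Qed.

Lemma en_stable n k J xi : en n k = Some xi -> (k <= J)%nat -> nth_error (Pre n J) k = Some xi.
Proof. intros h hk. destruct (Pre_prefix n k J hk) as [r ->]. rewrite nth_error_app1; auto.
  eapply en_lt; eauto. Qed.

Lemma en_in n k xi : en n k = Some xi -> In xi (Pre n k).
Proof. unfold en; apply nth_error_In. Qed.

Lemma en_inj n k k' xi : en n k = Some xi -> en n k' = Some xi -> k = k'.
Proof. intros h h'. set (J := Nat.max k k').
  pose proof (en_stable n k J xi h ltac:(lia)). pose proof (en_stable n k' J xi h' ltac:(lia)).
  pose proof (NoDup_Pre n J) as ND. rewrite NoDup_nth_error in ND. apply ND.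
  - apply nth_error_Some; congruence.
  - congruence. Qed.

Lemma en_surj n J i xi : nth_error (Pre n J) i = Some xi -> en n i = Some xi.
Proof. intros h. pose proof h as h0. unfold en.
  assert (hi : (i < length (Pre n J))%nat) by (apply nth_error_Some; congruence).
  destruct (Nat.le_gt_cases J i) as [l|l].
  - destruct (Pre_prefix n J i l) as [r ->]. rewrite nth_error_app1; auto.
  - destruct (Pre_prefix n i J ltac:(lia)) as [r E1]. rewrite E1 in h.
    destruct (Nat.eq_dec n 0) as [->|hn].
    + rewrite Pre_zero in hi. simpl in hi. assert (i = 0%nat) by lia. subst i.
      rewrite Pre_zero in h0 |- *. exact h0.
    + rewrite nth_error_app1 in h; auto. pose proof (Pre_length n i ltac:(lia)). lia. Qed.

Lemma en_surj' n J xi : In xi (Pre n J) -> exists i, (i < length (Pre n J))%nat /\ en n i = Some xi.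
Proof. intros h. destruct (In_nth_error _ _ h) as [i hi]. exists i. split.
  - apply nth_error_Some; congruence.
  - eapply en_surj; eauto. Qed.

Fixpoint bsearch (J : nat) (xi : list Z) : nat :=
  match J with O => O | S J' => if block (S J') xi then S J' else bsearch J' xi end.

Lemma bsearch_spec j J xi : block j xi = true -> (j <= J)%nat -> bsearch J xi = j.
Proof. induction J as [|J IH]; intros hb hj.
  - simpl; lia.
  - change (bsearch (S J) xi) with (if block (S J) xi then S J else bsearch J xi).
    destruct (block (S J) xi) eqn:e.
    + symmetry; eapply block_unique; eauto.
    + destruct (Nat.eq_dec j (S J)) as [->|ne]; [congruence|]. apply IH; auto; lia. Qed.

Lemma en_block n k xi : en n k = Some xi -> In xi (E n (bsearch k xi)).
Proof. intros h. apply en_in, In_Pre_E in h. destruct h as [j [hj h]].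
  rewrite (bsearch_spec j); auto. apply In_E in h; tauto. Qed.

Open Scope R_scope.

Lemma exp_mono x y : x <= y -> exp x <= exp y.
Proof. intros [h|<-]; [left; apply exp_increasing; auto| lra]. Qed.

Lemma Rpower_decr x y e : e <= 0 -> 0 < x <= y -> Rpower y e <= Rpower x e.
Proof. intros he [hx hxy]. unfold Rpower. apply exp_mono. pose proof (ln_le x y hx hxy). nra. Qed.

Lemma Rpower2_pow m j : Rpower 2 m ^ j = Rpower 2 (INR j * m).
Proof. rewrite <- Rpower_pow by apply exp_pos. rewrite Rpower_mult. f_equal; ring. Qed.

Lemma E_len n j : INR (length (E n j)) <= 8 ^ n * (2 ^ n) ^ j.
Proof.
  apply Rle_trans with (INR ((2 ^ (S (S (S j)))) ^ n)).
  - apply le_INR. eapply Nat.le_trans; [apply filter_length_le|]. rewrite length_box.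
    apply Nat.pow_le_mono_l. pose proof (Nat.pow_nonzero 2 j ltac:(lia)). simpl. lia.
  - rewrite !pow_INR. simpl INR. replace (1 + 1) with 2 by ring.
    replace (2 ^ S (S (S j))) with (8 * 2 ^ j) by (simpl; ring).
    rewrite Rpow_mult_distr. rewrite <- !pow_mult. rewrite Nat.mul_comm. lra. Qed.

Section Abounds.
Variables (n : nat) (m Ca : R) (a : list Z -> C).
Hypothesis ha : forall xi, length xi = n -> Cmod (a xi) <= Ca * japbr_pow xi m.
Hypothesis hm : m <= 0.

Lemma Ca_ge0 : 0 <= Ca.
Proof. specialize (ha (repeat 0%Z n) (repeat_length _ _)). pose proof (Cmod_ge_0 (a (repeat 0%Z n))).
  assert (0 < japbr_pow (repeat 0%Z n) m) by apply exp_pos. nra. Qed.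

Lemma a_bound j xi : In xi (E n j) -> Cmod (a xi) <= Ca * Rpower 2 m ^ j.
Proof. intros h. apply In_E in h. destruct h as [hl hb]. eapply Rle_trans; [apply ha; auto|].
  apply Rmult_le_compat_l; [apply Ca_ge0|]. unfold japbr_pow.
  pose proof (normsq_ge0 xi) as hN. apply IZR_le in hN.
  destruct j as [|j].
  - simpl. apply Rle_trans with (Rpower (1 + IZR (normsq xi)) 0); [apply Rle_Rpower; lra| rewrite Rpower_O; lra].
  - pose proof (block_lb (S j) xi ltac:(lia) hb) as hl4. apply IZR_le in hl4.
    rewrite <- pow_IZR in hl4. rewrite Rpower2_pow.
    eapply Rle_trans; [apply (Rpower_decr (IZR 4 ^ S j)); [lra| split; [apply pow_lt; lra|lra]]|].
    rewrite <- Rpower_pow by lra. rewrite Rpower_mult. unfold Rpower. apply Req_le. f_equal.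
    replace (IZR 4) with (2 * 2) by (simpl; lra). rewrite ln_mult by lra. field. Qed.
End Abounds.

Open Scope R_scope.

Lemma pow_decr x a b : 0 <= x <= 1 -> (a <= b)%nat -> x ^ b <= x ^ a.
Proof. intros hx h. induction h as [|b h IH]; [lra|]. simpl. pose proof (pow_le x b (proj1 hx)). nra. Qed.
Lemma pow_le1 x a : 0 <= x <= 1 -> x ^ a <= 1.
Proof. intros hx. rewrite <- (pow_O x). apply pow_decr; auto; lia. Qed.

Lemma rsum_app {A} (l1 l2 : list A) f : rsum (l1 ++ l2) f = rsum l1 f + rsum l2 f.
Proof. unfold rsum; induction l1; simpl; [ring|]. rewrite IHl1. ring. Qed.
Lemma rsum_ge0 {A} (l : list A) f : (forall x, 0 <= f x) -> 0 <= rsum l f.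
Proof. unfold rsum; intros H; induction l; simpl; [lra|]. specialize (H a); lra. Qed.
Lemma rsum_le {A} (l : list A) f g : (forall x, In x l -> f x <= g x) -> rsum l f <= rsum l g.
Proof. unfold rsum; induction l; intros H; simpl; [lra|].
  pose proof (H a (or_introl eq_refl)). pose proof (IHl (fun x h => H x (or_intror h))). lra. Qed.
Lemma rsum_incl {A} (l1 l2 : list A) g : NoDup l1 -> incl l1 l2 -> (forall x, 0 <= g x) ->
  rsum l1 g <= rsum l2 g.
Proof. revert l2. induction l1 as [|x l1 IH]; intros l2 hN hI hg.
  - unfold rsum at 1; simpl. apply rsum_ge0; auto.
  - inversion hN; subst. destruct (in_split x l2 (hI x (or_introl eq_refl))) as [u [v ->]].
    rewrite rsum_app. unfold rsum at 1 3; simpl. fold (rsum l1 g). fold (rsum v g).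
    assert (IH' : rsum l1 g <= rsum (u ++ v) g).
    { apply IH; auto. intros y hy. assert (hy2 : In y (u ++ x :: v)) by (apply hI; simpl; auto).
      apply in_app_iff in hy2. apply in_app_iff. destruct hy2 as [h|[h|h]]; auto. subst; contradiction. }
    rewrite rsum_app in IH'. lra. Qed.

Lemma sum_n_rsum (f : nat -> R) K : sum_n f K = rsum (seq 0 (S K)) f.
Proof. induction K; [rewrite sum_O; unfold rsum; simpl; ring|].
  rewrite sum_Sn, IHK. rewrite (seq_S (S K)). rewrite rsum_app. unfold rsum at 3; simpl. unfold plus; simpl. ring. Qed.

Definition evec (xi : list Z) : list Z -> C := fun eta => if list_eq_dec Z.eq_dec eta xi then 1%C else 0%C.

Section Rep.
Variables (n : nat) (w p q r m Ca : R) (a : list Z -> C).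
Hypothesis hp : 1 <= p.
Hypothesis hq : 0 < q.
Hypothesis hr : 0 < r.
Hypothesis ha : forall xi, length xi = n -> Cmod (a xi) <= Ca * japbr_pow xi m.
Hypothesis hm0 : m <= 0.
Hypothesis hnm : INR n + m < 0.
Hypothesis hnmr : INR n + m * r < 0.

Let rho := Rpower 2 m.
Let rho1 := 2 ^ n * rho.

Lemma rho_pos : 0 < rho. Proof. apply exp_pos. Qed.
Lemma rho1_bounds : 0 < rho1 < 1.
Proof. unfold rho1, rho. rewrite <- (Rpower_pow n 2) by lra. rewrite <- Rpower_plus.
  split; [apply exp_pos|]. rewrite <- (Rpower_O 2) by lra. apply Rpower_lt; lra. Qed.

Lemma lp_T c j : lp n p (Tmult a c) j <= (2 * 8 ^ n * Ca * rho1 ^ j) * lp n p c j.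
Proof. pose proof (Ca_ge0 n m Ca a ha).
  eapply Rle_trans; [apply (lp_cmp n p hp c _ j (Ca * rho ^ j))|].
  - pose proof (pow_le rho j (Rlt_le _ _ rho_pos)); nra.
  - intros xi hxi. unfold Tmult. rewrite Cmod_mult. apply Rmult_le_compat_r; [apply Cmod_ge_0|].
    apply (a_bound n m Ca a ha hm0); auto.
  - pose proof (E_len n j). pose proof (lp_ge0 n p c j). pose proof (pow_le rho j (Rlt_le _ _ rho_pos)).
    unfold rho1. rewrite Rpow_mult_distr.
    assert (0 <= Ca * rho ^ j) by nra.
    assert (2 * (Ca * rho ^ j) * INR (length (E n j)) <= 2 * (Ca * rho ^ j) * (8 ^ n * (2 ^ n) ^ j)) by
      (apply Rmult_le_compat_l; lra).
    replace (2 * 8 ^ n * Ca * ((2 ^ n) ^ j * rho ^ j)) with (2 * (Ca * rho ^ j) * (8 ^ n * (2 ^ n) ^ j)) by ring.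
    apply Rmult_le_compat_r; auto. Qed.

Lemma T_besov c : in_besov n w p q c -> in_besov n w p q (Tmult a c).
Proof. intros hc. pose proof (Ca_ge0 n m Ca a ha). pose proof rho1_bounds.
  assert (h8 : 0 <= 2 * 8 ^ n * Ca) by (pose proof (pow_le 8 n ltac:(lra)); nra).
  apply (besov_cmp n w p q hq c _ (rpow (2 * 8 ^ n * Ca) q)); auto; [apply rpow_ge0|].
  intros j. apply (bt_cmp n w p q hq); auto. eapply Rle_trans; [apply lp_T|].
  apply Rmult_le_compat_r; [apply lp_ge0|]. pose proof (pow_le1 rho1 j ltac:(lra)). pose proof (pow_le rho1 j ltac:(lra)). nra. Qed.


Lemma sum_n_last (u : nat -> R) j : (forall k, (k < j)%nat -> u k = 0) -> sum_n u j = u j.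
Proof. induction j as [|j IH]; intros H; [apply sum_O|]. rewrite sum_Sn, IH.
  - rewrite H by lia. unfold plus; simpl; ring.
  - intros k hk; apply H; lia. Qed.

Lemma csn_evec L xi : NoDup L -> In xi L -> csn L (evec xi) = 1.
Proof. intros hN hI. unfold csn.
  change (fold_right Rplus 0 (map (fun xi0 => Cmod (evec xi xi0)) L)) with (rsum L (fun eta => Cmod (evec xi eta))).
  rewrite <- (sum_delta L (fun _ => 1) xi hN hI). unfold rsum. f_equal. apply map_ext. intros eta.
  unfold evec. destruct (list_eq_dec Z.eq_dec eta xi); [rewrite Cmod_1| rewrite Cmod_0]; ring. Qed.

Lemma evec_other xi j j' eta : In xi (E n j) -> In eta (E n j') -> j <> j' -> evec xi eta = 0%C.
Proof. intros h h' hne. unfold evec. destruct (list_eq_dec Z.eq_dec eta xi) as [->|]; auto.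
  apply In_E in h. apply In_E in h'. exfalso. apply hne. eapply block_unique; [apply h|apply h']. Qed.

Lemma zero_besov : in_besov n w p q (fun _ => 0%C).
Proof. apply (fs_besov n w p q hp _ O). auto. Qed.

Lemma evec_besov xi j : In xi (E n j) -> in_besov n w p q (evec xi).
Proof. intros h. apply (fs_besov n w p q hp _ j). intros j' eta hj he. eapply evec_other; eauto. lia. Qed.

Lemma evec_norm xi j : In xi (E n j) -> besov_norm n w p q (evec xi) <= Rpower 2 (INR j * w).
Proof. intros h. unfold besov_norm.
  set (u := besov_term n w p q (evec xi)).
  assert (Hz : forall k, k <> j -> u k = 0).
  { intros k hk. unfold u. change (bt n w p q (evec xi) k = 0). rewrite bt_eq.
    rewrite (lp_zero n p hp); [rewrite Rmult_0_r; apply rpow_le0; lra|].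
    intros eta he. eapply evec_other; eauto. }
  assert (HS : Series u = u j).
  { apply is_series_unique. rewrite <- (sum_n_last u j) by (intros k hk; apply Hz; lia).
    apply (@is_series_ev0 R_AbsRing R_NormedModule). intros k hk. apply Hz. lia. }
  rewrite HS. unfold u. change (besov_term n w p q (evec xi) j) with (bt n w p q (evec xi) j). rewrite bt_eq.
  assert (hl : lp n p (evec xi) j <= 1).
  { rewrite lp_tpoly. eapply Rle_trans; [apply Lpnorm_ub; auto|]. rewrite csn_evec; [lra|apply NoDup_E|auto]. }
  pose proof (lp_ge0 n p (evec xi) j). assert (h2 : 0 < Rpower 2 (INR j * w)) by apply exp_pos.
  apply Rle_trans with (rpow (rpow (Rpower 2 (INR j * w)) q) (/ q)); [|rewrite rpow_inv; lra].
  apply rpow_le; [|left; apply Rinv_0_lt_compat; auto]. split; [apply rpow_ge0|].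
  apply rpow_le; [|lra]. split; [nra|]. nra. Qed.

Definition phi0 (k : nat) (c : list Z -> C) : C :=
  match en n k with Some xi => Cmult (a xi) (c xi) | None => 0%C end.
Definition y0 (k : nat) : list Z -> C :=
  match en n k with Some xi => evec xi | None => fun _ => 0%C end.
Definition M0 (k : nat) : R :=
  match en n k with Some xi => 2 * Rpower 2 (- (INR (bsearch k xi) * w)) * Cmod (a xi) | None => 0 end.

Lemma rep_dual k : dual_elem n w p q (phi0 k) (M0 k).
Proof. unfold dual_elem, phi0, M0. destruct (en n k) as [xi|] eqn:e.
  - pose proof (en_block n k xi e) as hE. set (j := bsearch k xi) in *.
    pose proof (exp_pos (- (INR j * w) * ln 2)). pose proof (Cmod_ge_0 (a xi)).
    split; [unfold Rpower; nra|]. split; [intros; unfold cadd; ring|]. split; [intros; unfold cscal; ring|].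
    intros c hc. rewrite Cmod_mult. pose proof (coef_norm n w p q hp hq c j xi hc hE).
    unfold Rpower in *. nra.
  - split; [lra|]. split; [intros; ring|]. split; [intros; ring|]. intros. rewrite Cmod_0.
    pose proof (besov_norm_ge0 n w p q c). lra. Qed.

Lemma rep_y k : in_besov n w p q (y0 k).
Proof. unfold y0. destruct (en n k) as [xi|] eqn:e; [|apply zero_besov].
  eapply evec_besov. apply (en_block n k xi e). Qed.

Definition og (k : nat) : R := match en n k with Some xi => rpow (2 * Cmod (a xi)) r | None => 0 end.

Lemma rep_f_le k : rpow (M0 k * besov_norm n w p q (y0 k)) r <= og k.
Proof. unfold og, M0, y0. destruct (en n k) as [xi|] eqn:e.
  - pose proof (en_block n k xi e) as hE. set (j := bsearch k xi) in *.
    apply rpow_le; [|lra]. pose proof (evec_norm xi j hE). pose proof (besov_norm_ge0 n w p q (evec xi)).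
    pose proof (Cmod_ge_0 (a xi)).
    assert (E2 : Rpower 2 (- (INR j * w)) * Rpower 2 (INR j * w) = 1).
    { rewrite <- Rpower_plus. replace (- (INR j * w) + INR j * w) with 0 by ring. apply Rpower_O; lra. }
    pose proof (exp_pos (- (INR j * w) * ln 2)). fold (Rpower 2 (- (INR j * w))) in H2.
    split; [repeat apply Rmult_le_pos; lra|].
    apply Rle_trans with (2 * Rpower 2 (- (INR j * w)) * Cmod (a xi) * Rpower 2 (INR j * w)).
    2: { replace (2 * Rpower 2 (- (INR j * w)) * Cmod (a xi) * Rpower 2 (INR j * w)) with
           (2 * Cmod (a xi) * (Rpower 2 (- (INR j * w)) * Rpower 2 (INR j * w))) by ring. rewrite E2; lra. }
    apply Rmult_le_compat_l; [repeat apply Rmult_le_pos; lra|auto].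
  - rewrite Rmult_0_l. rewrite rpow_le0; lra. Qed.

Definition somes (l : list nat) : list (list Z) :=
  flat_map (fun k => match en n k with Some x => [x] | None => [] end) l.

Lemma rsum_somes l : rsum l og = rsum (somes l) (fun xi => rpow (2 * Cmod (a xi)) r).
Proof. induction l as [|k l IH]; [reflexivity|]. unfold somes; simpl flat_map. rewrite rsum_app.
  fold (somes l). rewrite <- IH. unfold rsum at 1; simpl. fold (rsum l og). unfold og.
  destruct (en n k); unfold rsum; simpl; ring. Qed.

Lemma NoDup_somes l : NoDup l -> NoDup (somes l).
Proof. induction 1 as [|k l hk hN IH]; [constructor|]. unfold somes; simpl flat_map. fold (somes l).
  destruct (en n k) as [x|] eqn:e; simpl; auto. constructor; auto. intros hx.
  unfold somes in hx. apply in_flat_map in hx. destruct hx as [k' [hk' hx]].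
  destruct (en n k') as [x'|] eqn:e'; [|destruct hx]. destruct hx as [hxx|[]]. subst x'.
  pose proof (en_inj n k k' x e e'). subst; contradiction. Qed.

Lemma incl_somes K : incl (somes (seq 0 (S K))) (Pre n K).
Proof. intros x hx. unfold somes in hx. apply in_flat_map in hx. destruct hx as [k [hk hx]].
  apply in_seq in hk. destruct (en n k) as [x'|] eqn:e; [|destruct hx]. destruct hx as [<-|[]].
  apply en_in in e. destruct (Pre_prefix n k K ltac:(lia)) as [rr ->]. apply in_app_iff; auto. Qed.

Lemma rsum_le_const {A} (l : list A) g B : (forall x, In x l -> g x <= B) -> rsum l g <= INR (length l) * B.
Proof. unfold rsum; induction l as [|x l IH]; intros H; simpl length; simpl fold_right; [simpl; lra|].
  rewrite S_INR. specialize (IH (fun y h => H y (or_intror h))). specialize (H x (or_introl eq_refl)). lra. Qed.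

Lemma rpow_pow x j s : 0 < x -> rpow (x ^ j) s = rpow x s ^ j.
Proof. intros hx. induction j; simpl; [apply rpow_one|]. rewrite rpow_mult; [rewrite IHj; auto|lra|].
  apply pow_le; lra. Qed.

Let sig := 2 ^ n * rpow rho r.
Lemma sig_bounds : 0 < sig < 1.
Proof. unfold sig, rho. rewrite rpow_pos by apply exp_pos. rewrite Rpower_mult.
  rewrite <- (Rpower_pow n 2) by lra. rewrite <- Rpower_plus.
  split; [apply exp_pos|]. rewrite <- (Rpower_O 2) by lra. apply Rpower_lt; lra. Qed.

Let Cs := 8 ^ n * rpow (2 * Ca) r.

Lemma rsum_E_bound j : rsum (E n j) (fun xi => rpow (2 * Cmod (a xi)) r) <= Cs * sig ^ j.
Proof. pose proof (Ca_ge0 n m Ca a ha) as hCa.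
  eapply Rle_trans; [apply (rsum_le_const _ _ (rpow (2 * Ca) r * rpow rho r ^ j))|].
  - intros xi hxi. rewrite <- rpow_pow by apply rho_pos. rewrite <- rpow_mult; [|lra| apply pow_le; left; apply rho_pos].
    apply rpow_le; [|lra]. pose proof (Cmod_ge_0 (a xi)). split; [lra|].
    pose proof (a_bound n m Ca a ha hm0 j xi hxi). fold rho in H0. nra.
  - pose proof (E_len n j). unfold Cs, sig. rewrite Rpow_mult_distr.
    pose proof (rpow_ge0 (2 * Ca) r). pose proof (pow_le (rpow rho r) j (rpow_ge0 _ _)).
    assert (0 <= rpow (2 * Ca) r * rpow rho r ^ j) by nra.
    replace (8 ^ n * rpow (2 * Ca) r * ((2 ^ n) ^ j * rpow rho r ^ j)) with
      ((8 ^ n * (2 ^ n) ^ j) * (rpow (2 * Ca) r * rpow rho r ^ j)) by ring.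
    apply Rmult_le_compat_r; auto. Qed.

Lemma rsum_Pre_bound K : rsum (Pre n K) (fun xi => rpow (2 * Cmod (a xi)) r) <= Cs * (1 - sig ^ (S K)) / (1 - sig).
Proof. pose proof sig_bounds. induction K as [|K IH].
  - simpl Pre. eapply Rle_trans; [apply rsum_E_bound|]. right. simpl. field. lra.
  - simpl Pre. rewrite rsum_app. pose proof (rsum_E_bound (S K)).
    replace (Cs * (1 - sig ^ S (S K)) / (1 - sig)) with (Cs * (1 - sig ^ S K) / (1 - sig) + Cs * sig ^ S K)
      by (simpl; field; lra). lra. Qed.

Lemma rep_sum : ex_series (fun k => rpow (M0 k * besov_norm n w p q (y0 k)) r).
Proof. pose proof sig_bounds. assert (hCs : 0 <= Cs) by (unfold Cs; pose proof (pow_le 8 n ltac:(lra)); pose proof (rpow_ge0 (2*Ca) r); nra).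
  set (f := fun k => rpow (M0 k * besov_norm n w p q (y0 k)) r).
  assert (hf : forall k, 0 <= f k) by (intros; apply rpow_ge0).
  destruct (ex_finite_lim_seq_incr (sum_n f) (Cs / (1 - sig))) as [l hl].
  - intros K. rewrite sum_Sn. unfold plus; simpl. specialize (hf (S K)); lra.
  - intros K. rewrite sum_n_rsum. eapply Rle_trans; [apply (rsum_le _ _ og); intros; apply rep_f_le|].
    rewrite rsum_somes. eapply Rle_trans; [apply rsum_incl; [apply NoDup_somes, seq_NoDup| apply incl_somes| intros; apply rpow_ge0]|].
    eapply Rle_trans; [apply rsum_Pre_bound|]. apply Rmult_le_compat_r; [left; apply Rinv_0_lt_compat; lra|].
    pose proof (pow_le sig (S K) ltac:(lra)). nra.
  - exists l. exact hl. Qed.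


Lemma lp_bound_a c d j : (forall xi, In xi (E n j) -> Cmod (d xi) <= Cmod (a xi) * Cmod (c xi)) ->
  lp n p d j <= (2 * 8 ^ n * Ca * rho1 ^ j) * lp n p c j.
Proof. intros Hd. pose proof (Ca_ge0 n m Ca a ha).
  eapply Rle_trans; [apply (lp_cmp n p hp c _ j (Ca * rho ^ j))|].
  - pose proof (pow_le rho j (Rlt_le _ _ rho_pos)); nra.
  - intros xi hxi. eapply Rle_trans; [apply Hd; auto|]. apply Rmult_le_compat_r; [apply Cmod_ge_0|].
    apply (a_bound n m Ca a ha hm0); auto.
  - pose proof (E_len n j). pose proof (lp_ge0 n p c j). pose proof (pow_le rho j (Rlt_le _ _ rho_pos)).
    unfold rho1. rewrite Rpow_mult_distr.
    assert (0 <= Ca * rho ^ j) by nra.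
    assert (2 * (Ca * rho ^ j) * INR (length (E n j)) <= 2 * (Ca * rho ^ j) * (8 ^ n * (2 ^ n) ^ j)) by
      (apply Rmult_le_compat_l; lra).
    replace (2 * 8 ^ n * Ca * ((2 ^ n) ^ j * rho ^ j)) with (2 * (Ca * rho ^ j) * (8 ^ n * (2 ^ n) ^ j)) by ring.
    apply Rmult_le_compat_r; auto. Qed.

Lemma term_none k c xi : en n k <> Some xi -> Cmult (phi0 k c) (y0 k xi) = 0%C.
Proof. intros h. unfold phi0, y0. destruct (en n k) as [x|] eqn:e; [|ring].
  unfold evec. destruct (list_eq_dec Z.eq_dec xi x) as [->|]; [congruence|ring]. Qed.
Lemma term_some k c xi : en n k = Some xi -> Cmult (phi0 k c) (y0 k xi) = Cmult (a xi) (c xi).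
Proof. intros h. unfold phi0, y0. rewrite h. unfold evec. destruct (list_eq_dec Z.eq_dec xi xi); [ring|congruence]. Qed.

Lemma psum_S K c xi : psum phi0 y0 c (S K) xi = Cplus (psum phi0 y0 c K xi) (Cmult (phi0 K c) (y0 K xi)).
Proof. reflexivity. Qed.

Lemma psum_none K c xi : (forall k, (k < K)%nat -> en n k <> Some xi) -> psum phi0 y0 c K xi = 0%C.
Proof. induction K as [|K IH]; intros H; [reflexivity|]. rewrite psum_S.
  rewrite IH by (intros; apply H; lia). rewrite term_none by (apply H; lia). ring. Qed.

Lemma psum_some K c xi k0 : en n k0 = Some xi -> (k0 < K)%nat -> psum phi0 y0 c K xi = Cmult (a xi) (c xi).
Proof. intros h0. induction K as [|K IH]; intros hK; [lia|]. rewrite psum_S.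
  destruct (Nat.eq_dec k0 K) as [<-|ne].
  - rewrite term_some by auto. rewrite psum_none; [ring|]. intros k hk e. pose proof (en_inj n k k0 xi e h0). lia.
  - rewrite IH by lia. rewrite term_none; [ring|]. intros e. pose proof (en_inj n K k0 xi e h0). lia. Qed.

Definition dK (c : list Z -> C) (K : nat) : list Z -> C := csub (Tmult a c) (psum phi0 y0 c K).

Lemma dK_le c K xi : Cmod (dK c K xi) <= Cmod (a xi) * Cmod (c xi).
Proof. unfold dK, csub, Tmult.
  destruct (Classical_Prop.classic (exists k0, (k0 < K)%nat /\ en n k0 = Some xi)) as [[k0 [hk he]]|hn].
  - rewrite (psum_some K c xi k0) by auto. replace (Cminus (Cmult (a xi) (c xi)) (Cmult (a xi) (c xi))) with (RtoC 0) by ring.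
    rewrite Cmod_0. pose proof (Cmod_ge_0 (a xi)); pose proof (Cmod_ge_0 (c xi)); nra.
  - rewrite psum_none. { replace (Cminus (Cmult (a xi) (c xi)) (RtoC 0)) with (Cmult (a xi) (c xi)) by ring. rewrite Cmod_mult; lra. }
    intros k hk e. apply hn; eauto. Qed.

Lemma dK_zero c K xi J : In xi (Pre n J) -> (length (Pre n J) <= K)%nat -> dK c K xi = 0%C.
Proof. intros h hK. destruct (en_surj' n J xi h) as [i [hi he]]. unfold dK, csub, Tmult.
  rewrite (psum_some K c xi i) by (auto; lia). ring. Qed.

Lemma rep_conv c : in_besov n w p q c -> is_lim_seq (fun K => besov_norm n w p q (dK c K)) 0.
Proof. intros hc. pose proof (Ca_ge0 n m Ca a ha) as hCa. pose proof rho1_bounds as hr1.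
  set (B := 2 * 8 ^ n * Ca). assert (hB : 0 <= B) by (unfold B; pose proof (pow_le 8 n ltac:(lra)); nra).
  assert (KEY : forall J K, (length (Pre n J) <= K)%nat ->
     besov_norm n w p q (dK c K) <= B * rho1 ^ (S J) * besov_norm n w p q c).
  { intros J K hK. pose proof (pow_le rho1 (S J) ltac:(lra)).
    destruct (besov_cmp n w p q hq c (dK c K) (rpow (B * rho1 ^ (S J)) q)) as [_ HN]; auto.
    - apply rpow_ge0.
    - intros j. apply (bt_cmp n w p q hq); [nra|].
      destruct (Nat.le_gt_cases j J) as [hj|hj].
      + rewrite (lp_zero n p hp). { apply Rmult_le_pos; [nra|apply lp_ge0]. }
        intros xi hxi. apply (dK_zero c K xi J); auto. apply In_Pre_E. eauto.
      + eapply Rle_trans; [apply lp_bound_a; intros; apply dK_le|].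
        apply Rmult_le_compat_r; [apply lp_ge0|]. fold B. apply Rmult_le_compat_l; auto.
        apply pow_decr; [lra|lia].
    - rewrite rpow_inv in HN by nra. exact HN. }
  apply is_lim_seq_spec. intros eps. set (Nc := besov_norm n w p q c).
  assert (hNc : 0 <= Nc) by apply besov_norm_ge0.
  destruct (pow_lt_1_zero rho1 ltac:(rewrite Rabs_right; lra) (eps / (B * Nc + 1))) as [N HN].
  { apply Rdiv_lt_0_compat; [apply cond_pos| nra]. }
  exists (length (Pre n N)). intros K hK. rewrite Rminus_0_r.
  rewrite Rabs_right by (apply Rle_ge, besov_norm_ge0).
  eapply Rle_lt_trans; [apply (KEY N K hK)|].
  specialize (HN (S N) ltac:(lia)). rewrite Rabs_right in HN by (apply Rle_ge, pow_le; lra).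
  pose proof (cond_pos eps). pose proof (pow_le rho1 (S N) ltac:(lra)).
  assert (B * Nc * rho1 ^ S N <= B * Nc * (eps / (B * Nc + 1))) by (apply Rmult_le_compat_l; nra).
  assert (B * Nc * (eps / (B * Nc + 1)) < eps).
  { replace (B * Nc * (eps / (B * Nc + 1))) with (eps * (B * Nc / (B * Nc + 1))) by (field; nra).
    assert (B * Nc / (B * Nc + 1) < 1).
    { apply (Rmult_lt_reg_r (B * Nc + 1)); [nra|]. unfold Rdiv. rewrite Rmult_assoc, Rinv_l by nra. nra. }
    nra. }
  fold Nc. replace (B * rho1 ^ S N * Nc) with (B * Nc * rho1 ^ S N) by ring. lra. Qed.

Lemma rep_nuclear : nuclear_rep n w p q r (Tmult a) phi0 M0 y0.
Proof. split; [exact rep_dual|]. split; [exact rep_y|]. split; [exact rep_sum|]. exact rep_conv. Qed.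

End Rep.

Open Scope R_scope.

Lemma Clim_iff (f : nat -> C) l : filterlim f eventually (locally l) <->
  (forall eps, 0 < eps -> exists N, forall K, (N <= K)%nat -> Cmod (Cminus (f K) l) < eps).
Proof. rewrite (@filterlim_locally_ball_norm C_AbsRing nat C_NormedModule). split.
  - intros H eps he. destruct (H (mkposreal eps he)) as [N HN]. exists N. intros K hK. apply (HN K hK).
  - intros H eps. destruct (H eps (cond_pos eps)) as [N HN]. exists N. intros K hK. apply (HN K hK).
  - typeclasses eauto. Qed.

Lemma series_Clim (u : nat -> C) l : is_series u l <->
  (forall eps, 0 < eps -> exists N, forall K, (N <= K)%nat -> Cmod (Cminus (sum_n u K) l) < eps).
Proof. split; intros h.
  - apply Clim_iff. exact h.
  - pose proof (proj2 (Clim_iff (sum_n u) l) h) as h'. exact h'. Qed.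

Lemma Clim_unique (f : nat -> C) l l' : filterlim f eventually (locally l) -> filterlim f eventually (locally l') -> l = l'.
Proof. intros h h'. apply (@filterlim_locally_unique nat C_AbsRing C_NormedModule eventually _ f); auto. Qed.

Lemma Cmod_opp_minus u v : Cmod (Cminus u v) = Cmod (Cminus v u).
Proof. replace (Cminus u v) with (Cmult (RtoC (-1)) (Cminus v u)) by ring. rewrite Cmod_mult.
  replace (Cmod (RtoC (-1))) with 1; [ring|]. unfold Cmod; simpl. replace (-1 * (-1 * 1) + 0 * (0 * 1)) with 1 by ring. rewrite sqrt_1; auto. Qed.

Lemma Cminus_0_r (z : C) : Cminus z (RtoC 0) = z.
Proof. ring. Qed.

Lemma Cmod_tri3 u v w : Cmod (Cminus u w) <= Cmod (Cminus u v) + Cmod (Cminus v w).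
Proof. replace (Cminus u w) with (Cplus (Cminus u v) (Cminus v w)) by ring. apply Cmod_triangle. Qed.

Lemma is_series_zeroC : is_series (fun _ : nat => RtoC 0) (RtoC 0).
Proof. assert (H := @is_series_ev0 C_AbsRing C_NormedModule (fun _ => RtoC 0) O (fun _ _ => eq_refl)).
  rewrite sum_O in H. exact H. Qed.

Lemma is_series_list {A} (L : list A) (u : A -> nat -> C) (l : A -> C) :
  (forall x, In x L -> is_series (u x) (l x)) ->
  is_series (fun k => fold_right Cplus (RtoC 0) (map (fun x => u x k) L)) (fold_right Cplus (RtoC 0) (map l L)).
Proof. induction L as [|x L IH]; intros H; simpl.
  - apply is_series_zeroC.
  - pose proof (@is_series_plus C_AbsRing C_NormedModule _ _ _ _ (H x (or_introl eq_refl)) (IH (fun y h => H y (or_intror h)))) as P.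
    exact P. Qed.

Lemma Cmod_series_le (u : nat -> C) (l : C) (v : nat -> R) : @is_series C_AbsRing C_NormedModule u l -> (forall k, Cmod (u k) <= v k) -> ex_series v ->
  Cmod l <= Series v.
Proof. intros hu hv hs.
  assert (hv0 : forall k, 0 <= v k) by (intros k; eapply Rle_trans; [apply Cmod_ge_0|apply hv]).
  assert (P : forall K, Cmod (sum_n u K) <= Series v).
  { intros K. eapply Rle_trans; [|apply (sum_n_le_Series v K hv0 hs)].
    induction K; [rewrite !sum_O; apply hv|]. rewrite !sum_Sn. eapply Rle_trans; [apply Cmod_triangle|].
    unfold plus; simpl. specialize (hv (S K)). unfold plus in IHK; simpl in IHK. lra. }
  apply Rnot_lt_le. intros hlt. set (eps := Cmod l - Series v).
  pose proof (proj1 (series_Clim u l) hu) as hu2. clear hu. rename hu2 into hu. destruct (hu eps ltac:(unfold eps; lra)) as [N HN]. specialize (HN N (le_n N)).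
  specialize (P N). pose proof (Cmod_tri3 l (sum_n u N) (RtoC 0)).
  rewrite !Cminus_0_r in H.
  rewrite Cmod_opp_minus in HN. unfold eps in HN. lra. Qed.

Lemma ex_series_cmp (e D : nat -> R) : (forall k, 0 <= e k <= D k) -> ex_series D -> ex_series e.
Proof. intros H hD. apply (@ex_series_le R_AbsRing R_CompleteNormedModule _ D); auto.
  intros k. unfold norm; simpl; unfold abs; simpl. rewrite Rabs_right by (apply Rle_ge; apply H). apply H. Qed.

Lemma finite_sum_lim (e : nat -> nat -> R) K0 : (forall k, is_lim_seq (fun N => e N k) 0) ->
  is_lim_seq (fun N => sum_n (e N) K0) 0.
Proof. intros H. induction K0.
  - apply (is_lim_seq_ext (fun N => e N O)); [intros; rewrite sum_O; auto| apply H].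
  - apply (is_lim_seq_ext (fun N => sum_n (e N) K0 + e N (S K0))).
    + intros N. rewrite sum_Sn. reflexivity.
    + replace (Finite 0) with (Finite (0 + 0)) by (f_equal; ring). apply is_lim_seq_plus'; auto. Qed.

Lemma dct0 (e : nat -> nat -> R) (D : nat -> R) : (forall N k, 0 <= e N k <= D k) -> ex_series D ->
  (forall k, is_lim_seq (fun N => e N k) 0) -> is_lim_seq (fun N => Series (e N)) 0.
Proof. intros H hD hk. apply is_lim_seq_spec. intros eps. pose proof (cond_pos eps) as he.
  assert (LD : is_lim_seq (sum_n D) (Series D)) by (apply Series_correct; auto).
  apply is_lim_seq_spec in LD. destruct (LD (pos_div_2 eps)) as [K0 HK0]. specialize (HK0 K0 (le_n _)).
  pose proof (finite_sum_lim e K0 hk) as LF. apply is_lim_seq_spec in LF. destruct (LF (pos_div_2 eps)) as [N0 HN0].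
  exists N0. intros N hN. specialize (HN0 N hN). simpl in HN0, HK0. rewrite Rminus_0_r in *.
  assert (hs : ex_series (e N)) by (apply (ex_series_cmp _ D); auto).
  assert (hsD : ex_series (fun k => D (S K0 + k)%nat)) by (apply ex_series_incr_n; auto).
  rewrite (Series_incr_n (e N) (S K0)) by (auto; lia). rewrite (Series_incr_n D (S K0)) in HK0 by (auto; lia).
  simpl Init.Nat.pred in *. rewrite <- sum_n_Reals in *.
  assert (S1 : Series (fun k => e N (S K0 + k)%nat) <= Series (fun k => D (S K0 + k)%nat)).
  { apply Series_le; [intros k; apply H|auto]. }
  assert (S0 : 0 <= Series (fun k => e N (S K0 + k)%nat)).
  { apply Series_ge0'. intros; apply H. apply ex_series_incr_n; auto. }
  pose proof (sum_n_ge0 (e N) K0 (fun k => proj1 (H N k))).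
  rewrite Rabs_right in HN0 by lra.
  rewrite Rabs_right by lra.
  apply Rabs_lt_between in HK0. lra. Qed.

Lemma ex_series_from_rpow (D : nat -> R) r : 0 < r <= 1 -> (forall k, 0 <= D k) ->
  ex_series (fun k => rpow (D k) r) -> ex_series D.
Proof. intros hr hD hs. set (S := Series (fun k => rpow (D k) r)).
  set (Kc := rpow S (/ r - 1)).
  assert (hr1 : 0 <= / r - 1) by (assert (1 <= / r) by (rewrite <- Rinv_1; apply Rinv_le_contravar; lra); lra).
  apply (ex_series_cmp D (fun k => Kc * rpow (D k) r)); [|apply ex_series_Rscal; auto].
  intros k. split; auto.
  pose proof (Series_ge_term (fun k => rpow (D k) r) k (fun k => rpow_ge0 _ _) hs) as hk. fold S in hk.
  destruct (Req_dec (D k) 0) as [e0|ne].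
  - rewrite e0. pose proof (rpow_ge0 S (/ r - 1)). pose proof (rpow_ge0 0 r). unfold Kc. nra.
  - assert (hpos : 0 < rpow (D k) r) by (apply rpow_gt0; specialize (hD k); lra).
    rewrite <- (rpow_inv (D k) r) at 1 by (auto; lra).
    replace (/ r) with (1 + (/ r - 1)) at 1 by ring. rewrite rpow_plus by auto. rewrite rpow_1 by lra.
    unfold Kc. rewrite Rmult_comm. cbv beta in hk. apply Rmult_le_compat_r; [lra|]. apply rpow_le; lra. Qed.

Lemma besov_ext n w p q (c d : list Z -> C) : (forall xi, c xi = d xi) -> in_besov n w p q c -> in_besov n w p q d.
Proof. intros H h. replace d with c; auto. apply functional_extensionality; auto. Qed.

Lemma E_notin_Pre n j N eta : In eta (E n j) -> (N < j)%nat -> ~ In eta (Pre n N).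
Proof. intros h hj h'. apply In_Pre_E in h'. destruct h' as [j' [hj' h']].
  apply In_E in h. apply In_E in h'. pose proof (block_unique _ _ _ (proj2 h) (proj2 h')). lia. Qed.
Lemma E_in_Pre n j N eta : In eta (E n j) -> (j <= N)%nat -> In eta (Pre n N).
Proof. intros h hj. apply In_Pre_E. eauto. Qed.

Definition lsum (L : list (list Z)) (yy : list Z -> C) : list Z -> C :=
  fold_right (fun xi acc => cadd (cscal (yy xi) (evec xi)) acc) (fun _ => RtoC 0) L.

Lemma lsum_out L yy eta : ~ In eta L -> lsum L yy eta = RtoC 0.
Proof. induction L as [|x L IH]; intros h; [reflexivity|]. simpl. unfold cadd, cscal. rewrite IH by (intros h'; apply h; right; auto).
  unfold evec. destruct (list_eq_dec Z.eq_dec eta x) as [->|]; [exfalso; apply h; left; auto| ring]. Qed.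
Lemma lsum_in L yy eta : NoDup L -> In eta L -> lsum L yy eta = yy eta.
Proof. induction L as [|x L IH]; intros hN h; [destruct h|]. inversion hN; subst. simpl. unfold cadd, cscal.
  unfold evec. destruct (list_eq_dec Z.eq_dec eta x) as [->|ne].
  - rewrite lsum_out by auto. ring.
  - destruct h as [->|h]; [congruence|]. rewrite IH by auto. ring. Qed.

Section Trace.
Variables (n : nat) (w p q r m Ca : R) (a : list Z -> C).
Hypothesis hp : 1 <= p.
Hypothesis hq : 0 < q.
Hypothesis hr : 0 < r.
Hypothesis hr1 : r <= 1.
Hypothesis ha : forall xi, length xi = n -> Cmod (a xi) <= Ca * japbr_pow xi m.
Hypothesis hm0 : m <= 0.
Hypothesis hnm : INR n + m < 0.
Variables (phi : nat -> (list Z -> C) -> C) (M : nat -> R) (y : nat -> list Z -> C).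
Hypothesis Hrep : nuclear_rep n w p q r (Tmult a) phi M y.

Lemma Hd k : dual_elem n w p q (phi k) (M k). Proof. apply Hrep. Qed.
Lemma Hy k : in_besov n w p q (y k). Proof. apply Hrep. Qed.

Lemma csub_besov c d : in_besov n w p q c -> in_besov n w p q d -> in_besov n w p q (csub c d).
Proof. intros hc hd. apply (besov_ext n w p q (cadd c (cscal (RtoC (-1)) d))).
  - intros xi; unfold cadd, cscal, csub; ring.
  - apply besov_add; auto. apply besov_scal; auto. Qed.

Lemma psum_besov c K : in_besov n w p q (psum phi y c K).
Proof. induction K; simpl; [apply zero_besov; auto|]. apply besov_add; auto. apply besov_scal; auto. apply Hy. Qed.

Lemma psum_eval c xi K : sum_n (fun k => Cmult (phi k c) (y k xi)) K = psum phi y c (S K) xi.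
Proof. induction K.
  - rewrite sum_O. simpl. unfold cadd, cscal. ring.
  - rewrite sum_Sn, IHK. reflexivity. Qed.

Lemma series_coef xi j : In xi (E n j) -> @is_series C_AbsRing C_NormedModule (fun k => Cmult (phi k (evec xi)) (y k xi)) (a xi).
Proof. intros hx. set (e := evec xi). assert (he : in_besov n w p q e) by (eapply evec_besov; eauto).
  destruct Hrep as [_ [_ [_ Hc]]]. specialize (Hc e he).
  set (Rp := Rpower 2 (- (INR j * w))). assert (hRp : 0 < Rp) by apply exp_pos.
  apply series_Clim. intros eps heps.
  apply is_lim_seq_spec in Hc. destruct (Hc (mkposreal (eps / (2 * Rp + 1)) ltac:(apply Rdiv_lt_0_compat; lra))) as [N HN].
  exists N. intros K hK. specialize (HN (S K) ltac:(lia)). simpl in HN. rewrite Rminus_0_r in HN.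
  set (d := csub (Tmult a e) (psum phi y e (S K))) in HN.
  assert (hd : in_besov n w p q d).
  { apply csub_besov; [eapply T_besov; eauto|apply psum_besov]. }
  pose proof (coef_norm n w p q hp hq d j xi hd hx) as HC. fold Rp in HC.
  rewrite psum_eval. rewrite Cmod_opp_minus.
  assert (Ed : d xi = Cminus (a xi) (psum phi y e (S K) xi)).
  { unfold d, csub, Tmult, e, evec. destruct (list_eq_dec Z.eq_dec xi xi); [ring|congruence]. }
  rewrite <- Ed. rewrite Rabs_right in HN by (apply Rle_ge, besov_norm_ge0).
  pose proof (besov_norm_ge0 n w p q d).
  apply Rle_lt_trans with (2 * Rp * besov_norm n w p q d); auto.
  apply Rle_lt_trans with ((2 * Rp + 1) * besov_norm n w p q d); [nra|].
  replace eps with ((2 * Rp + 1) * (eps / (2 * Rp + 1))) by (field; lra).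
  apply Rmult_lt_compat_l; [lra|auto]. Qed.

Lemma phi_zero k : phi k (fun _ => RtoC 0) = RtoC 0.
Proof. destruct (Hd k) as [_ [_ [Hs _]]].
  replace (fun _ : list Z => RtoC 0) with (cscal (RtoC 0) (fun _ => RtoC 0)) at 1
    by (apply functional_extensionality; intros; unfold cscal; ring).
  rewrite Hs by (apply zero_besov; auto). ring. Qed.

Lemma lsum_besov L yy N : incl L (Pre n N) -> in_besov n w p q (lsum L yy).
Proof. intros hI. apply (fs_besov n w p q hp _ N). intros j eta hj he. apply lsum_out.
  intros h. apply (E_notin_Pre n j N eta he hj). apply hI; auto. Qed.

Lemma phi_lsum k L yy N : incl L (Pre n N) ->
  phi k (lsum L yy) = fold_right Cplus (RtoC 0) (map (fun xi => Cmult (phi k (evec xi)) (yy xi)) L).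
Proof. destruct (Hd k) as [_ [Hadd [Hs _]]]. induction L as [|x L IH]; intros hI; simpl.
  - apply phi_zero.
  - assert (hx : In x (Pre n N)) by (apply hI; left; auto). apply In_Pre_E in hx. destruct hx as [j [_ hx]].
    assert (hI' : incl L (Pre n N)) by (intros z hz; apply hI; right; auto).
    rewrite Hadd; [|apply besov_scal; auto; eapply evec_besov; eauto| eapply lsum_besov; eauto].
    rewrite Hs by (eapply evec_besov; eauto). rewrite IH by auto. ring. Qed.

Definition sN (N : nat) : C := fold_right Cplus (RtoC 0) (map a (Pre n N)).

Lemma series_b N : @is_series C_AbsRing C_NormedModule (fun k => phi k (lsum (Pre n N) (y k))) (sN N).
Proof.
  apply (@is_series_ext C_AbsRing C_NormedModule (fun k => fold_right Cplus (RtoC 0) (map (fun xi => Cmult (phi k (evec xi)) (y k xi)) (Pre n N)))).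
  - intros k. symmetry. apply (phi_lsum k _ _ N). intros z hz; auto.
  - unfold sN. apply (is_series_list (Pre n N) (fun xi k => Cmult (phi k (evec xi)) (y k xi)) a).
    intros xi hxi. apply In_Pre_E in hxi. destruct hxi as [j [_ hxi]]. eapply series_coef; eauto. Qed.

Definition zN (N : nat) (yy : list Z -> C) : list Z -> C := csub yy (lsum (Pre n N) yy).

Lemma bt_zN N yy j : bt n w p q (zN N yy) j = if le_dec j N then 0 else bt n w p q yy j.
Proof. destruct (le_dec j N) as [hj|hj].
  - rewrite bt_eq. rewrite (lp_zero n p hp).
    + rewrite Rmult_0_r. apply rpow_le0; lra.
    + intros xi hxi. unfold zN, csub. rewrite lsum_in; [ring|apply NoDup_Pre|eapply E_in_Pre; eauto].
  - rewrite !bt_eq. f_equal. f_equal. apply lp_ext. intros xi hxi. unfold zN, csub.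
    rewrite lsum_out; [ring|]. apply (E_notin_Pre n j N xi hxi). lia. Qed.

Lemma zN_le N yy : in_besov n w p q yy -> in_besov n w p q (zN N yy) /\ besov_norm n w p q (zN N yy) <= besov_norm n w p q yy.
Proof. intros hy. destruct (besov_cmp n w p q hq yy (zN N yy) 1) as [h1 h2]; auto; [lra| |].
  - intros j. rewrite bt_zN. destruct (le_dec j N); [pose proof (bt_ge0 n w p q yy j); lra|lra].
  - split; auto. rewrite rpow_one in h2. lra. Qed.

Lemma zN_lim yy : in_besov n w p q yy -> is_lim_seq (fun N => besov_norm n w p q (zN N yy)) 0.
Proof. intros hy. set (u := bt n w p q yy).
  assert (hu : ex_series u) by exact hy.
  assert (T : forall N, Series (bt n w p q (zN N yy)) = Series u - sum_n u N).
  { intros N. destruct (zN_le N yy hy) as [hz _].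
    rewrite (Series_incr_n _ (S N)) by (auto; lia). rewrite (Series_incr_n u (S N)) by (auto; lia).
    simpl Init.Nat.pred. rewrite <- !sum_n_Reals.
    assert (E0 : sum_n (bt n w p q (zN N yy)) N = 0).
    { assert (forall K, (K <= N)%nat -> sum_n (bt n w p q (zN N yy)) K = 0).
      { induction K; intros hK; [rewrite sum_O| rewrite sum_Sn, IHK by lia]; rewrite bt_zN;
        destruct (le_dec _ N); try lia; [reflexivity| unfold plus; simpl; ring]. }
      apply H; lia. }
    rewrite E0. rewrite (Series_ext (fun k => bt n w p q (zN N yy) (S N + k)%nat) (fun k => u (S N + k)%nat)).
    - ring.
    - intros k. rewrite bt_zN. destruct (le_dec _ N); [lia|reflexivity]. }
  assert (L0 : is_lim_seq (fun N => Series u - sum_n u N) 0).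
  { replace (Finite 0) with (Finite (Series u - Series u)) by (f_equal; ring).
    apply is_lim_seq_minus'; [apply is_lim_seq_const| apply Series_correct; auto]. }
  apply is_lim_seq_spec in L0. apply is_lim_seq_spec. intros eps.
  pose proof (cond_pos eps) as he.
  destruct (L0 (mkposreal (rpow eps q) (rpow_gt0 eps q he))) as [N0 HN0].
  exists N0. intros N hN. specialize (HN0 N hN). simpl in HN0. rewrite Rminus_0_r in *.
  rewrite Rabs_right by (apply Rle_ge, besov_norm_ge0). unfold besov_norm.
  change (besov_term n w p q (zN N yy)) with (bt n w p q (zN N yy)). rewrite T.
  assert (h0 : 0 <= Series u - sum_n u N).
  { pose proof (sum_n_le_Series u N (bt_ge0 n w p q yy) hu). lra. }
  rewrite Rabs_right in HN0 by lra.
  rewrite <- (rpow_inv eps q) by lra. apply rpow_lt; [lra|]. apply Rinv_0_lt_compat; auto. Qed.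

Lemma trace_main : exists T0, @is_series C_AbsRing C_NormedModule (fun k => phi k (y k)) T0 /\
  filterlim sN eventually (locally T0).
Proof.
  set (D := fun k => M k * besov_norm n w p q (y k)).
  assert (hM : forall k, 0 <= M k) by (intros k; apply (Hd k)).
  assert (hD0 : forall k, 0 <= D k) by (intros k; unfold D; pose proof (besov_norm_ge0 n w p q (y k)); specialize (hM k); nra).
  assert (hD : ex_series D).
  { apply (ex_series_from_rpow D r); auto. destruct Hrep as [_ [_ [H _]]]. exact H. }
  assert (hb : forall k, Cmod (phi k (y k)) <= D k).
  { intros k. destruct (Hd k) as [_ [_ [_ Hb]]]. apply Hb. apply Hy. }
  assert (hex : @ex_series C_AbsRing C_NormedModule (fun k => phi k (y k))).
  { apply (@ex_series_le C_AbsRing C_CompleteNormedModule _ D); auto. }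
  destruct hex as [T0 HT0]. exists T0. split; auto.
  set (e := fun N k => M k * besov_norm n w p q (zN N (y k))).
  assert (he : forall N k, 0 <= e N k <= D k).
  { intros N k. unfold e, D. destruct (zN_le N (y k) (Hy k)) as [_ h]. pose proof (besov_norm_ge0 n w p q (zN N (y k))).
    specialize (hM k). split; [nra|]. apply Rmult_le_compat_l; auto. }
  assert (hel : forall k, is_lim_seq (fun N => e N k) 0).
  { intros k. unfold e. pose proof (is_lim_seq_scal_l _ (M k) 0 (zN_lim (y k) (Hy k))) as H.
    simpl in H. rewrite Rmult_0_r in H. exact H. }
  pose proof (dct0 e D he hD hel) as HS.
  assert (Bnd : forall N, Cmod (Cminus (sN N) T0) <= Series (e N)).
  { intros N. rewrite Cmod_opp_minus.
    apply (Cmod_series_le (fun k => Cminus (phi k (y k)) (phi k (lsum (Pre n N) (y k))))).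
    - pose proof (@is_series_minus C_AbsRing C_NormedModule _ _ _ _ HT0 (series_b N)) as P. exact P.
    - intros k. destruct (Hd k) as [_ [Hadd [_ Hb]]].
      assert (E1 : phi k (y k) = Cplus (phi k (lsum (Pre n N) (y k))) (phi k (zN N (y k)))).
      { rewrite <- Hadd; [| eapply lsum_besov; intros z hz; eauto | apply (zN_le N (y k) (Hy k))].
        f_equal. apply functional_extensionality. intros xi. unfold cadd, zN, csub. ring. }
      rewrite E1. replace (Cminus (Cplus (phi k (lsum (Pre n N) (y k))) (phi k (zN N (y k)))) (phi k (lsum (Pre n N) (y k))))
        with (phi k (zN N (y k))) by ring. apply Hb. apply (zN_le N (y k) (Hy k)).
    - apply (ex_series_cmp _ D); auto. }
  apply Clim_iff. intros eps heps. apply is_lim_seq_spec in HS. destruct (HS (mkposreal eps heps)) as [N0 HN0].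
  exists N0. intros N hN. specialize (HN0 N hN). simpl in HN0. rewrite Rminus_0_r in HN0.
  eapply Rle_lt_trans; [apply Bnd|]. eapply Rle_lt_trans; [apply Rle_abs|auto]. Qed.

End Trace.

Open Scope R_scope.

Lemma normsq_le xi N : (forall z, In z xi -> (- N <= z <= N)%Z) -> (normsq xi <= Z.of_nat (length xi) * N * N)%Z.
Proof. induction xi as [|z xi IH]; intros H; [simpl; lia|]. rewrite normsq_cons.
  specialize (IH (fun w h => H w (or_intror h))). specialize (H z (or_introl eq_refl)).
  simpl length. rewrite Nat2Z.inj_succ. nia. Qed.

Lemma Pre_sub_box n J N' : (2 ^ (S J) <= N')%nat -> incl (Pre n J) (box n N').
Proof. intros hN x hx. apply In_Pre in hx. destruct hx as [hl hs]. apply In_box. split; auto.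
  intros z hz. pose proof (normsq_coord x z hz). rewrite pow4 in hs.
  apply inj_le in hN. rewrite Nat2Z.inj_pow in hN. change (Z.of_nat 2) with 2%Z in hN.
  assert (0 <= 2 ^ Z.of_nat (S J))%Z by (apply Z.pow_nonneg; lia). nia. Qed.

Lemma box_sub_Pre n N' : incl (box n N') (Pre n (n * N' * N')).
Proof. intros x hx. apply In_box in hx. destruct hx as [hl hb]. apply In_Pre. split; auto.
  pose proof (normsq_le x (Z.of_nat N') hb). rewrite hl in H.
  pose proof (Z.pow_gt_lin_r 4 (Z.of_nat (n * N' * N')) ltac:(lia) ltac:(lia)).
  pose proof (pow4_mono (n * N' * N') (S (n * N' * N')) ltac:(lia)).
  rewrite !Nat2Z.inj_mul in *. lia. Qed.

Definition csum {A} (L : list A) (f : A -> C) : C := fold_right Cplus (RtoC 0) (map f L).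

Lemma csum_app {A} (L1 L2 : list A) f : csum (L1 ++ L2) f = Cplus (csum L1 f) (csum L2 f).
Proof. unfold csum; induction L1; simpl; [ring|]. rewrite IHL1. ring. Qed.
Lemma csum_split {A} (L : list A) f (g : A -> bool) :
  csum L f = Cplus (csum (filter g L) f) (csum (filter (fun x => negb (g x)) L) f).
Proof. unfold csum; induction L as [|x L IH]; simpl; [ring|]. rewrite IH. destruct (g x); simpl; ring. Qed.
Lemma csum_perm {A} (L L' : list A) f : Permutation L L' -> csum L f = csum L' f.
Proof. unfold csum; induction 1 as [|x l l' h IH|x y l|l l' l'' h1 IH1 h2 IH2]; simpl; auto.
  - rewrite IH; auto.
  - ring.
  - congruence. Qed.
Lemma Cmod_csum {A} (L : list A) f : Cmod (csum L f) <= rsum L (fun x => Cmod (f x)).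
Proof. unfold csum, rsum; induction L; simpl; [rewrite Cmod_0; lra|].
  eapply Rle_trans; [apply Cmod_triangle|]. lra. Qed.
Lemma rsum_filter_le {A} (L : list A) f g : (forall x, 0 <= g x) -> rsum (filter f L) g <= rsum L g.
Proof. unfold rsum; intros H; induction L as [|x L IH]; simpl; [lra|]. destruct (f x); simpl; specialize (H x); lra. Qed.
Lemma filter_none {A} (L : list A) f : (forall x, In x L -> f x = false) -> filter f L = [].
Proof. induction L as [|x L IH]; intros H; simpl; auto. rewrite H by (left; auto). apply IH; intros; apply H; right; auto. Qed.

Definition inb (L : list (list Z)) (x : list Z) : bool := if in_dec (list_eq_dec Z.eq_dec) x L then true else false.
Lemma inb_true L x : inb L x = true <-> In x L.
Proof. unfold inb; destruct (in_dec _ x L); split; auto; discriminate. Qed.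

Section Box.
Variables (n : nat) (m Ca : R) (a : list Z -> C).
Hypothesis ha : forall xi, length xi = n -> Cmod (a xi) <= Ca * japbr_pow xi m.
Hypothesis hm0 : m <= 0.
Hypothesis hnm : INR n + m < 0.

Let rho1 := 2 ^ n * Rpower 2 m.

Lemma rsum_E_a j : rsum (E n j) (fun x => Cmod (a x)) <= 8 ^ n * Ca * rho1 ^ j.
Proof. pose proof (Ca_ge0 n m Ca a ha). pose proof (exp_pos (m * ln 2)) as hr. fold (Rpower 2 m) in hr.
  eapply Rle_trans; [apply (rsum_le_const _ _ (Ca * Rpower 2 m ^ j))|].
  - intros x hx. apply (a_bound n m Ca a ha hm0); auto.
  - pose proof (E_len n j). unfold rho1. rewrite Rpow_mult_distr. pose proof (pow_le (Rpower 2 m) j ltac:(lra)).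
    assert (0 <= Ca * Rpower 2 m ^ j) by nra.
    replace (8 ^ n * Ca * ((2 ^ n) ^ j * Rpower 2 m ^ j)) with ((8 ^ n * (2 ^ n) ^ j) * (Ca * Rpower 2 m ^ j)) by ring.
    apply Rmult_le_compat_r; auto. Qed.

Lemma tail_bound J d : rsum (filter (fun x => negb (inb (Pre n J) x)) (Pre n (J + d))) (fun x => Cmod (a x)) <=
  8 ^ n * Ca * (rho1 ^ (S J) - rho1 ^ (S (J + d))) / (1 - rho1).
Proof. pose proof (rho1_bounds n m hnm) as hb. fold rho1 in hb. induction d as [|d IH].
  - rewrite Nat.add_0_r. rewrite filter_none.
    + unfold rsum; simpl. right. field. lra.
    + intros x hx. apply inb_true in hx. rewrite hx. reflexivity.
  - rewrite Nat.add_succ_r. simpl Pre. rewrite filter_app, rsum_app.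
    pose proof (rsum_filter_le (E n (S (J + d))) (fun x => negb (inb (Pre n J) x)) (fun x => Cmod (a x)) (fun x => Cmod_ge_0 _)).
    pose proof (rsum_E_a (S (J + d))).
    replace (8 ^ n * Ca * (rho1 ^ S J - rho1 ^ S (S (J + d))) / (1 - rho1)) with
      (8 ^ n * Ca * (rho1 ^ S J - rho1 ^ S (J + d)) / (1 - rho1) + 8 ^ n * Ca * rho1 ^ S (J + d)) by (simpl; field; lra).
    lra. Qed.

Lemma box_lim T0 : filterlim (sN n a) eventually (locally T0) -> filterlim (box_sum n a) eventually (locally T0).
Proof. intros HT. pose proof (proj1 (Clim_iff _ _) HT) as H1. apply Clim_iff. intros eps he.
  pose proof (rho1_bounds n m hnm) as hb. fold rho1 in hb. pose proof (Ca_ge0 n m Ca a ha) as hCa.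
  set (Ct := 8 ^ n * Ca / (1 - rho1)).
  assert (hCt : 0 <= Ct) by (unfold Ct; pose proof (pow_le 8 n ltac:(lra)); apply Rmult_le_pos; [nra| left; apply Rinv_0_lt_compat; lra]).
  destruct (H1 (eps / 2) ltac:(lra)) as [N1 HN1].
  destruct (pow_lt_1_zero rho1 ltac:(rewrite Rabs_right; lra) (eps / 2 / (Ct + 1)) ltac:(apply Rdiv_lt_0_compat; lra)) as [N2 HN2].
  set (J := Nat.max N1 N2).
  exists (2 ^ (S J))%nat. intros N' hN'.
  unfold box_sum. fold (csum (box n N') a).
  rewrite (csum_split _ _ (inb (Pre n J))).
  assert (P1 : csum (filter (inb (Pre n J)) (box n N')) a = sN n a J).
  { unfold sN. fold (csum (Pre n J) a). apply csum_perm. apply NoDup_Permutation.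
    - apply NoDup_filter, NoDup_box.
    - apply NoDup_Pre.
    - intros x. rewrite filter_In, inb_true. split; [tauto|]. intros h; split; auto. eapply Pre_sub_box; eauto. }
  rewrite P1.
  set (R2 := csum (filter (fun x => negb (inb (Pre n J) x)) (box n N')) a).
  assert (B2 : Cmod R2 <= Ct * rho1 ^ (S J)).
  { eapply Rle_trans; [apply Cmod_csum|].
    set (d := (n * N' * N')%nat).
    eapply Rle_trans; [apply (rsum_incl _ (filter (fun x => negb (inb (Pre n J) x)) (Pre n (J + d))))|].
    - apply NoDup_filter, NoDup_box.
    - intros x hx. apply filter_In in hx. apply filter_In. destruct hx as [hx hn]. split; auto.
      apply box_sub_Pre in hx. destruct (Pre_prefix n (n * N' * N') (J + d) ltac:(unfold d; lia)) as [rr ->].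
      apply in_app_iff; auto.
    - intros; apply Cmod_ge_0.
    - eapply Rle_trans; [apply tail_bound|]. unfold Ct. pose proof (pow_le rho1 (S (J + d)) ltac:(lra)).
      pose proof (pow_le 8 n ltac:(lra)).
      assert (0 < / (1 - rho1)) by (apply Rinv_0_lt_compat; lra). unfold Rdiv.
      assert (0 <= 8 ^ n * Ca) by nra.
      assert (0 <= 8 ^ n * Ca * rho1 ^ S (J + d) * / (1 - rho1)) by (apply Rmult_le_pos; [apply Rmult_le_pos; lra | lra]).
      nra. }
  specialize (HN1 J ltac:(unfold J; lia)). specialize (HN2 (S J) ltac:(unfold J; lia)).
  rewrite Rabs_right in HN2 by (apply Rle_ge, pow_le; lra).
  assert (B3 : Ct * rho1 ^ S J < eps / 2).
  { apply Rle_lt_trans with (Ct * (eps / 2 / (Ct + 1))); [apply Rmult_le_compat_l; lra|].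
    replace (Ct * (eps / 2 / (Ct + 1))) with ((eps / 2) * (Ct / (Ct + 1))) by (field; lra).
    assert (Ct / (Ct + 1) < 1).
    { apply (Rmult_lt_reg_r (Ct + 1)); [lra|]. unfold Rdiv. rewrite Rmult_assoc, Rinv_l by lra. lra. }
    nra. }
  replace (Cminus (Cplus (sN n a J) R2) T0) with (Cplus (Cminus (sN n a J) T0) R2) by ring.
  eapply Rle_lt_trans; [apply Cmod_triangle|]. lra. Qed.

End Box.

Open Scope R_scope.

Theorem corollary5p2 (n : nat) (r alpha p1 m Ca : R) (a : list Z -> C) :
  0 < r <= 1 ->
  0 < alpha <= 1 / 2 ->
  (forall xi : list Z, length xi = n -> Cmod (a xi) <= Ca * japbr_pow xi m) ->
  1 < p1 <= 2 ->
  m < - INR n / r - alpha * INR n ->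
  forall w : R,
    r_nuclear n w p1 (/ (alpha + / conj_exp p1)) r (Tmult a) /\
    exists S : C,
      filterlim (box_sum n a) eventually (locally S) /\
      (forall phi M y,
         nuclear_rep n w p1 (/ (alpha + / conj_exp p1)) r (Tmult a) phi M y ->
         is_series (fun k => phi k (y k)) S).
Proof.
  intros [hr hr1] [hal hal2] ha [hp1 hp2] hm w.
  set (q := / (alpha + / conj_exp p1)).
  assert (hq : 0 < q).
  { unfold q, conj_exp. apply Rinv_0_lt_compat. assert (0 < / (p1 / (p1 - 1))).
    { apply Rinv_0_lt_compat. apply Rdiv_lt_0_compat; lra. } lra. }
  assert (hp : 1 <= p1) by lra.
  pose proof (pos_INR n) as hn0.
  assert (hnr : INR n <= INR n / r).
  { unfold Rdiv. rewrite <- (Rmult_1_r (INR n)) at 1. apply Rmult_le_compat_l; auto.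
    rewrite <- Rinv_1. apply Rinv_le_contravar; lra. }
  assert (hm1 : m < - INR n / r) by nra.
  assert (hnmr : INR n + m * r < 0).
  { assert (E : - INR n / r * r = - INR n) by (field; lra). nra. }
  assert (hm0 : m <= 0).
  { assert (0 <= INR n / r) by (apply Rdiv_le_0_compat; lra). unfold Rdiv in *. lra. }
  assert (hnm : INR n + m < 0) by (unfold Rdiv in *; lra).
  pose proof (rep_nuclear n w p1 q r m Ca a hp hq hr ha hm0 hnm hnmr) as HR.
  split.
  - split.
    + intros c hc. eapply T_besov; eauto.
    + exists (phi0 n a), (M0 n w a), (y0 n). exact HR.
  - destruct (trace_main n w p1 q r m Ca a hp hq hr hr1 ha hm0 hnm _ _ _ HR) as [T0 [_ HT]].
    exists T0. split.
    + exact (box_lim n m Ca a ha hm0 hnm T0 HT).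
    + intros phi M y Hr. destruct (trace_main n w p1 q r m Ca a hp hq hr hr1 ha hm0 hnm _ _ _ Hr) as [T1 [HS HT1]].
      rewrite (Clim_unique _ _ _ HT HT1). exact HS.
Qed.
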